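(* Let $A$ and $B$ be $k$-algebras and $\tau\colon B\otimes A\to A\otimes B$ a twisting map. Suppose there exist subalgebras $A_0\subseteq A$ and $B_0\subseteq B$ such that (i) the extensions $A_0\subseteq A$ and $B_0\subseteq B$ are both finite (i.e. $A$ is finitely generated as a left and as a right $A_0$-module, and similarly for $B$ over $B_0$), and (ii) the restrictions of $\tau$ to the subspaces $B\otimes A_0$ and $B_0\otimes A$ agree with the corresponding restrictions of the tensor swap $\sigma_{B,A}\colon b\otimes a\mapsto a\otimes b$. Then $\tau\colon B\otimes^!A\to A\otimes^!B$ is continuous for the cofinite topologies on $A$ and $B$, and consequently there is a coalgebra isomorphism $(A\otimes_\tau B)^\circ\cong A^\circ\otimes^{\tau^\circ}B^\circ$, where $\tau^\circ\colon A^\circ\otimes B^\circ\to B^\circ\otimes A^\circ$ is the continuous dual of $\tau$ (a cotwisting map).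
   Context: $k$ is a field (discrete topology); algebras are unital associative. For an algebra $R$, the cofinite topology is the linear topology whose open subspaces are those containing a two-sided ideal of finite codimension; $R^\circ$ is the finite dual coalgebra (functionals whose kernel contains an ideal of finite codimension, i.e. functionals continuous for the cofinite topology). For linearly topologized spaces $E,F$, $E\otimes^!F$ is $E\otimes F$ with the linear topology whose open subspaces are those containing $E_0\otimes F+E\otimes F_0$ for some open $E_0,F_0$; continuous duals $(-)^\circ=\mathrm{Top}_k(-,k)$ satisfy $(A\otimes^!B)^\circ\cong A^\circ\otimes B^\circ$ for cofinite topologies, which is how $\tau^\circ$ is regarded as a map $A^\circ\otimes B^\circ\to B^\circ\otimes A^\circ$. A twisting map $\tau\colon B\otimes A\to A\otimes B$ is a linear map such that $m_\tau=(m_A\otimes m_B)\circ(\mathrm{id}_A\otimes\tau\otimes\mathrm{id}_B)$ is an associative multiplication on $A\otimes B$ with identity $1\otimes1$, giving the algebra $A\otimes_\tau B$. For coalgebras $C,D$ and a linear map $\phi\colon C\otimes D\to D\otimes C$ such that $\Delta_\phi=(\mathrm{id}_C\otimes\phi\otimes\mathrm{id}_D)\circ(\Delta_C\otimes\Delta_D)$ is coassociative with counit $\varepsilon_C\otimes\varepsilon_D$ (a cotwisting map), $C\otimes^\phi D$ denotes the resulting coalgebra. *)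

(* Defs.v *)
From HB Require Import structures.
From mathcomp Require Import all_boot all_order all_algebra.
From mathcomp Require Import ring.
From mathcomp Require Import boolp classical_sets functions.
From Stdlib Require ClassicalEpsilon.

Set Warnings "-notation-overridden -ambiguous-paths -redundant-canonical-projection -projection-no-head-constant -notation-incompatible-prefix".
Set Implicit Arguments.
Unset Strict Implicit.
Unset Printing Implicit Defensive.

Import GRing.Theory.
Local Open Scope ring_scope.
Local Open Scope classical_set_scope.

Section Lin.
Variable k : fieldType.

Definition is_lin (V W : lmodType k) (f : V -> W) : Prop :=
  forall (a : k) (u v : V), f (a *: u + v) = a *: f u + f v.

Definition is_bilin (U V W : lmodType k) (f : U -> V -> W) : Prop :=
  (forall v, is_lin (fun u => f u v)) /\ (forall u, is_lin (f u)).

Definition subspace (V : lmodType k) (U : set V) : Prop :=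
  U 0 /\ forall (a : k) (u v : V), U u -> U v -> U (a *: u + v).

Definition two_sided_ideal (R : lmodType k) (mul : R -> R -> R) (I : set R) :=
  subspace I /\ forall x y, I y -> I (mul x y) /\ I (mul y x).

(* I has finite codimension: R/I is finite dimensional, i.e. I is the kernel
   of a linear map into some k^n. *)
Definition fin_codim (R : lmodType k) (I : set R) : Prop :=
  exists (n : nat) (p : R -> 'rV[k]_n), is_lin p /\ forall x, I x <-> p x = 0.

Definition cof_ideal (R : lmodType k) (mul : R -> R -> R) (I : set R) :=
  two_sided_ideal mul I /\ fin_codim I.

Definition cof_open (R : lmodType k) (mul : R -> R -> R) (U : set R) : Prop :=
  subspace U /\ exists I, cof_ideal mul I /\ I `<=` U.

Definition in_fdual (R : lmodType k) (mul : R -> R -> R) (f : R -> k^o) : Prop :=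
  is_lin f /\ exists I, cof_ideal mul I /\ forall x, I x -> f x = 0.

Definition subalg (A : algType k) (A0 : set A) : Prop :=
  A0 1 /\ subspace A0 /\ forall x y, A0 x -> A0 y -> A0 (x * y).

Definition fin_gen_left (A : algType k) (A0 : set A) : Prop :=
  exists s : seq A, forall a : A, exists c : seq A,
    size c = size s /\ (forall x, x \in c -> A0 x) /\
    a = \sum_(i < size s) c`_i * s`_i.

Definition fin_gen_right (A : algType k) (A0 : set A) : Prop :=
  exists s : seq A, forall a : A, exists c : seq A,
    size c = size s /\ (forall x, x \in c -> A0 x) /\
    a = \sum_(i < size s) s`_i * c`_i.

Definition finite_ext (A : algType k) (A0 : set A) : Prop :=
  fin_gen_left A0 /\ fin_gen_right A0.

(* continuity of a map between linearly topologized spaces, topologies given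
   by their families of open subspaces *)
Definition lin_continuous (S T : lmodType k) (OS : set S -> Prop)
  (OT : set T -> Prop) (f : S -> T) : Prop :=
  forall W : set T, OT W -> OS (fun x => W (f x)).

End Lin.

Section FDual.
Variables (k : fieldType) (R : lmodType k) (mul : R -> R -> R).

Definition fdual_pred : {pred R -> k^o} := fun f => `[< in_fdual mul f >].

Lemma in_fdual0 : in_fdual mul 0.
Proof.
split; first by move=> a u v /=; rewrite scaler0 addr0.
exists setT; split; last by [].
split.
  by split=> //; split.
exists 0%N, (fun _ => 0); split; first by move=> a u v; rewrite scaler0 addr0.
by move=> x; split.
Qed.

Lemma in_fdualL (a : k) (f g : R -> k^o) :
  in_fdual mul f -> in_fdual mul g -> in_fdual mul (a *: f + g).
Proof.
case=> lf [I [[[[I0 Il] Im] [n [p [lp Ip]]]] fI]].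
case=> lg [J [[[[J0 Jl] Jm] [m [q [lq Jq]]]] gJ]].
split.
  have E x : (a *: f + g) x = a * f x + g x by [].
  move=> b u v; rewrite !E (lf b u v) (lg b u v).
  rewrite /GRing.scale /=; ring.
exists (fun x => I x /\ J x); split; last first.
  move=> x [/fI fx /gJ gx].
  by have -> : (a *: f + g) x = a * f x + g x by []; rewrite fx gx mulr0 addr0.
split.
  split.
    split; first by split.
    by move=> b u v [Iu Ju] [Iv Jv]; split; [apply: Il|apply: Jl].
  by move=> x y [Iy Jy]; have [? ?] := Im x y Iy; have [? ?] := Jm x y Jy.
exists (n + m)%N, (fun x => row_mx (p x) (q x)); split.
  by move=> b u v; rewrite (lp b u v) (lq b u v) scale_row_mx add_row_mx.
move=> x; split.
  by move=> [/Ip px /Jq qx]; rewrite px qx row_mx0.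
move=> /eqP; rewrite -row_mx0 => /eqP /eq_row_mx [/Ip ? /Jq ?]; by [].
Qed.

Lemma fdual_closed : subsemimod_closed fdual_pred.
Proof.
have P0 : (0 : R -> k^o) \in fdual_pred by apply/asboolP; exact: in_fdual0.
split; first split.
- exact: P0.
- move=> f g /asboolP Pf /asboolP Pg; apply/asboolP.
  by have := in_fdualL 1 Pf Pg; rewrite scale1r.
- move=> a f /asboolP Pf; apply/asboolP.
  by have := in_fdualL a Pf in_fdual0; rewrite addr0.
Qed.

HB.instance Definition _ :=
  GRing.isSubmodClosed.Build k (R -> k^o) fdual_pred fdual_closed.

Record fdual := FDual { fdval :> R -> k^o ; _ : fdval \in fdual_pred }.
HB.instance Definition _ := [isSub for fdval].
HB.instance Definition _ := [Choice of fdual by <:].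
HB.instance Definition _ := [SubChoice_isSubLmodule of fdual by <:].

End FDual.

(* A "tensor product functor" is a choice, for all k-spaces V W, of a space  *)
(* tens V W with a bilinear map tm : V -> W -> tens V W that is universal    *)
(* among bilinear maps out of V x W.  The theorem is stated for an arbitrary *)
(* such choice (all choices are canonically isomorphic).                     *)

Section Tensor.
Variable k : fieldType.
Variable tens : lmodType k -> lmodType k -> lmodType k.
Variable tm : forall V W : lmodType k, V -> W -> tens V W.
Arguments tm {V W}.

Definition tensor_univ : Prop :=
  (forall V W : lmodType k, is_bilin (@tm V W)) /\
  (forall (V W X : lmodType k) (f : V -> W -> X), is_bilin f ->
     exists g : tens V W -> X, is_lin g /\ forall v w, g (tm v w) = f v w) /\
  (forall (V W X : lmodType k) (g h : tens V W -> X), is_lin g -> is_lin h ->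
     (forall v w, g (tm v w) = h (tm v w)) -> g = h).

Definition tlift (V W X : lmodType k) (f : V -> W -> X) : tens V W -> X :=
  ClassicalEpsilon.epsilon (inhabits (fun _ => 0))
    (fun g => is_lin g /\ forall v w, g (tm v w) = f v w).

Definition tmap (U V U' V' : lmodType k) (f : U -> U') (g : V -> V') :
  tens U V -> tens U' V' := tlift (fun u v => tm (f u) (g v)).

Definition tassoc (U V W : lmodType k) : tens (tens U V) W -> tens U (tens V W)
  := tlift (fun (X : tens U V) (w : W) => tlift (fun u v => tm u (tm v w)) X).

Definition tswap (V W : lmodType k) : tens V W -> tens W V :=
  tlift (fun v w => tm w v).

Definition tspan (V W : lmodType k) (P : V -> W -> Prop) : set (tens V W) :=
  fun X => exists s : seq (V * W),
    (forall p, p \in s -> P p.1 p.2) /\ X = \sum_(p <- s) tm p.1 p.2.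

(* the linear topology on E (x)^! F, given the open subspaces of E and F *)
Definition tens_open (E F : lmodType k) (OE : set E -> Prop)
  (OF : set F -> Prop) (W : set (tens E F)) : Prop :=
  subspace W /\ exists E0 F0, OE E0 /\ OF F0 /\
    tspan (fun e f => E0 e \/ F0 f) `<=` W.

(* m_tau = (m_A (x) m_B) o (id_A (x) tau (x) id_B), as a bilinear product on
   A (x) B: (a (x) b)(a' (x) b') = (m_A (x) m_B)(a (x) tau(b (x) a') (x) b') *)
Definition twisted_mul (A B : algType k) (tau : tens B A -> tens A B) :
  tens A B -> tens A B -> tens A B :=
  tlift (fun (a : A) (b : B) =>
    tlift (fun (a' : A) (b' : B) =>
      tmap (fun x : A => a * x) (fun y : B => y * b') (tau (tm b a')))).

Definition is_twisting (A B : algType k) (tau : tens B A -> tens A B) : Prop :=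
  is_lin tau /\ associative (twisted_mul tau) /\
  left_id (tm (1 : A) (1 : B)) (twisted_mul tau) /\
  right_id (tm (1 : A) (1 : B)) (twisted_mul tau).

Definition is_coalg (C : lmodType k) (delta : C -> tens C C) (eps : C -> k^o)
  : Prop :=
  is_lin delta /\ is_lin eps /\
  (forall c, tassoc (tmap delta id (delta c)) = tmap id delta (delta c)) /\
  (forall c, tlift (fun (e c' : C) => (eps e : k) *: c') (delta c) = c) /\
  (forall c, tlift (fun (c' e : C) => (eps e : k) *: c') (delta c) = c).

(* Delta_phi = (id_C (x) phi (x) id_D) o (Delta_C (x) Delta_D) *)
Definition cotw_delta (C D : lmodType k) (phi : tens C D -> tens D C)
  (deltaC : C -> tens C C) (deltaD : D -> tens D D) :
  tens C D -> tens (tens C D) (tens C D) :=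
  tlift (fun (c : C) (d : D) =>
    tlift (fun (c1 c2 : C) =>
      tlift (fun (d1 d2 : D) =>
        tlift (fun (d' : D) (c' : C) => tm (tm c1 d') (tm c' d2))
              (phi (tm c2 d1))) (deltaD d)) (deltaC c)).

Definition cotw_eps (C D : lmodType k) (epsC : C -> k^o) (epsD : D -> k^o) :
  tens C D -> k^o := tlift (fun c d => ((epsC c : k) * epsD d : k^o)).

Definition is_cotwisting (C D : lmodType k) (phi : tens C D -> tens D C)
  (deltaC : C -> tens C C) (epsC : C -> k^o)
  (deltaD : D -> tens D D) (epsD : D -> k^o) : Prop :=
  is_lin phi /\
  is_coalg (cotw_delta phi deltaC deltaD) (cotw_eps epsC epsD).

Definition fd_pair2 (R : lmodType k) (mul : R -> R -> R)
  (Z : tens (fdual mul) (fdual mul)) (x y : R) : k^o :=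
  tlift (fun g h : fdual mul => ((fdval g x : k) * fdval h y : k^o)) Z.

Definition fd_delta (R : lmodType k) (mul : R -> R -> R) (f : fdual mul) :
  tens (fdual mul) (fdual mul) :=
  ClassicalEpsilon.epsilon (inhabits 0)
    (fun Z => forall x y, fd_pair2 Z x y = fdval f (mul x y)).

Definition fd_eps (R : lmodType k) (mul : R -> R -> R) (one : R)
  (f : fdual mul) : k^o := fdval f one.

Notation fdualA A := (@fdual k A (@GRing.mul A)).

(* the canonical pairing A° (x) B° x (A (x) B) -> k, through which
   A° (x) B° is identified with (A (x)^! B)° *)
Definition tpair (A B : algType k) (xi : tens (fdualA A) (fdualA B))
  (X : tens A B) : k^o :=
  tlift (fun (f : fdualA A) (g : fdualA B) =>
    tlift (fun (a : A) (b : B) => ((fdval f a : k) * fdval g b : k^o)) X) xi.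

Definition tau_dual (A B : algType k) (tau : tens B A -> tens A B)
  (xi : tens (fdualA A) (fdualA B)) : tens (fdualA B) (fdualA A) :=
  ClassicalEpsilon.epsilon (inhabits 0)
    (fun eta => forall X : tens B A, tpair eta X = tpair xi (tau X)).

End Tensor.

Notation fdualA A := (@fdual _ A (@GRing.mul A)).

(* Main.v *)
Require Import Defs.
From HB Require Import structures.
From mathcomp Require Import all_boot all_order all_algebra.
From mathcomp Require Import ring.
From mathcomp Require Import boolp classical_sets functions.
From Stdlib Require ClassicalEpsilon.

Set Warnings "-notation-overridden -ambiguous-paths -redundant-canonical-projection -projection-no-head-constant -notation-incompatible-prefix".
Set Implicit Arguments.
Unset Strict Implicit.
Unset Printing Implicit Defensive.

Import GRing.Theory.
Local Open Scope ring_scope.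
Local Open Scope classical_set_scope.
Section LinBasics.
Variable k : fieldType.

Lemma scaleoE (a x : k^o) : a *: x = a * x. Proof. by []. Qed.

Section L.
Variables (V W : lmodType k) (f : V -> W) (Hf : is_lin f).
Lemma linD u v : f (u + v) = f u + f v.
Proof. by have := Hf 1 u v; rewrite !scale1r. Qed.
Lemma lin0 : f 0 = 0.
Proof. have := linD 0 0; rewrite addr0 => H; apply: (addrI (f 0)); by rewrite addr0 -H. Qed.
Lemma linZ a u : f (a *: u) = a *: f u.
Proof. by have := Hf a u 0; rewrite !addr0 lin0 addr0. Qed.
Lemma linN u : f (- u) = - f u.
Proof. by rewrite -scaleN1r linZ scaleN1r. Qed.
Lemma linB u v : f (u - v) = f u - f v.
Proof. by rewrite linD linN. Qed.
Lemma lin_sum (I : Type) (r : seq I) (P : pred I) (F : I -> V) :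
  f (\sum_(i <- r | P i) F i) = \sum_(i <- r | P i) f (F i).
Proof. exact: (big_morph f linD lin0). Qed.
End L.

Lemma lin_comp (U V W : lmodType k) (f : V -> W) (g : U -> V) :
  is_lin f -> is_lin g -> is_lin (f \o g).
Proof. by move=> Hf Hg a u v /=; rewrite Hg Hf. Qed.

Lemma lin_id (V : lmodType k) : is_lin (@id V).
Proof. by []. Qed.

Lemma lin_lincomb (V W : lmodType k) (f g : V -> W) (c : k) :
  is_lin f -> is_lin g -> is_lin (fun x => c *: f x + g x).
Proof.
move=> Hf Hg a u v; rewrite Hf Hg !scalerDr !scalerA mulrC.
by rewrite -!addrA; congr (_ + _); rewrite addrCA.
Qed.

Lemma lin_zero (V W : lmodType k) : is_lin (fun _ : V => (0 : W)).
Proof. by move=> a u v; rewrite scaler0 addr0. Qed.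

Lemma lin_scale (V W : lmodType k) (f : V -> W) (c : k) :
  is_lin f -> is_lin (fun x => c *: f x).
Proof. by move=> Hf; have := lin_lincomb c Hf (@lin_zero V W); under eq_fun do rewrite addr0. Qed.

Lemma lin_sumf (V W : lmodType k) (I : Type) (r : seq I) (F : I -> V -> W) :
  (forall i, is_lin (F i)) -> is_lin (fun x => \sum_(i <- r) F i x).
Proof.
move=> HF; elim: r => [|i r IH].
  by under eq_fun do rewrite big_nil; exact: lin_zero.
under eq_fun do rewrite big_cons.
by have := lin_lincomb 1 (HF i) IH; under eq_fun do rewrite scale1r.
Qed.

Lemma lin_mulr (c : k) : is_lin (fun x : k^o => (x * c : k^o)).
Proof. by move=> a u v; rewrite /GRing.scale /=; ring. Qed.
Lemma lin_mull (c : k) : is_lin (fun x : k^o => (c * x : k^o)).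
Proof. by move=> a u v; rewrite /GRing.scale /=; ring. Qed.

Lemma bilin_of (U V W : lmodType k) (f : U -> V -> W) :
  (forall v, is_lin (fun u => f u v)) -> (forall u, is_lin (f u)) -> is_bilin f.
Proof. by split. Qed.

End LinBasics.

Section Main.
Variable k : fieldType.
Variable tens : lmodType k -> lmodType k -> lmodType k.
Variable tm : forall V W : lmodType k, V -> W -> tens V W.
Hypothesis Htens : tensor_univ tm.
Arguments tm : clear implicits.
Local Notation "v *t w" := (tm _ _ v w) (at level 30).

Lemma tm_bilin (V W : lmodType k) : is_bilin (tm V W).
Proof. by case: Htens. Qed.

Lemma tliftP (V W X : lmodType k) (f : V -> W -> X) : is_bilin f ->
  is_lin (tlift tm f) /\ forall v w, tlift tm f (v *t w) = f v w.
Proof.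
move=> Hf; rewrite /tlift; case: Htens => _ [H _].
exact: (ClassicalEpsilon.epsilon_spec (inhabits (fun _ => 0)) _ (H _ _ _ f Hf)).
Qed.

Lemma tlift_lin (V W X : lmodType k) (f : V -> W -> X) : is_bilin f ->
  is_lin (tlift tm f).
Proof. by move/tliftP=> []. Qed.

Lemma tlift_tm (V W X : lmodType k) (f : V -> W -> X) : is_bilin f ->
  forall v w, tlift tm f (v *t w) = f v w.
Proof. by move/tliftP=> []. Qed.

Lemma tens_ext (V W X : lmodType k) (g h : tens V W -> X) :
  is_lin g -> is_lin h -> (forall v w, g (v *t w) = h (v *t w)) ->
  forall x, g x = h x.
Proof. by case: Htens => _ [_ H] Hg Hh E x; rewrite (H _ _ _ g h Hg Hh E). Qed.

Lemma tlift_uniq (V W X : lmodType k) (f : V -> W -> X) (g : tens V W -> X) :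
  is_bilin f -> is_lin g -> (forall v w, g (v *t w) = f v w) ->
  forall x, g x = tlift tm f x.
Proof.
move=> Hf Hg E; apply: tens_ext => // [|v w]; first exact: tlift_lin.
by rewrite E tlift_tm.
Qed.

Section TM.
Variables V W : lmodType k.
Lemma tmDl (u v : V) (w : W) : (u + v) *t w = u *t w + v *t w.
Proof. exact: (linD ((@tm_bilin V W).1 w)). Qed.
Lemma tmDr (v : V) (u w : W) : v *t (u + w) = v *t u + v *t w.
Proof. exact: (linD ((@tm_bilin V W).2 v)). Qed.
Lemma tmZl a (v : V) (w : W) : (a *: v) *t w = a *: v *t w.
Proof. have /= H := linZ ((@tm_bilin V W).1 w) a v; exact H. Qed.
Lemma tmZr a (v : V) (w : W) : v *t (a *: w) = a *: v *t w.
Proof. have /= H := linZ ((@tm_bilin V W).2 v) a w; exact H. Qed.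
Lemma tm0l (w : W) : (0 : V) *t w = 0.
Proof. exact: (lin0 ((@tm_bilin V W).1 w)). Qed.
Lemma tm0r (v : V) : v *t (0 : W) = 0.
Proof. exact: (lin0 ((@tm_bilin V W).2 v)). Qed.
Lemma tmNl (v : V) (w : W) : (- v) *t w = - v *t w.
Proof. exact: (linN ((@tm_bilin V W).1 w)). Qed.
Lemma tmNr (v : V) (w : W) : v *t (- w) = - v *t w.
Proof. exact: (linN ((@tm_bilin V W).2 v)). Qed.
Lemma tm_suml (I : Type) (r : seq I) (P : pred I) (F : I -> V) (w : W) :
  (\sum_(i <- r | P i) F i) *t w = \sum_(i <- r | P i) (F i) *t w.
Proof. exact: (lin_sum ((@tm_bilin V W).1 w)). Qed.
Lemma tm_sumr (I : Type) (r : seq I) (P : pred I) (v : V) (F : I -> W) :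
  v *t (\sum_(i <- r | P i) F i) = \sum_(i <- r | P i) v *t (F i).
Proof. exact: (lin_sum ((@tm_bilin V W).2 v)). Qed.
End TM.

Lemma tspan0 (V W : lmodType k) (P : V -> W -> Prop) : tspan tm P 0.
Proof. by exists [::]; rewrite big_nil. Qed.

Lemma tspanD (V W : lmodType k) (P : V -> W -> Prop) x y :
  tspan tm P x -> tspan tm P y -> tspan tm P (x + y).
Proof.
move=> [s [Ps ->]] [t [Pt ->]]; exists (s ++ t); split; last by rewrite big_cat.
by move=> p; rewrite mem_cat => /orP [/Ps|/Pt].
Qed.

Lemma tspan_tm (V W : lmodType k) (P : V -> W -> Prop) v w :
  P v w -> tspan tm P (v *t w).
Proof. by move=> H; exists [:: (v, w)]; rewrite big_seq1; split => // p; rewrite inE => /eqP ->. Qed.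

Lemma tspan_sum (V W : lmodType k) (P : V -> W -> Prop) (I : Type) (r : seq I)
  (F : I -> tens V W) :
  (forall i, tspan tm P (F i)) -> tspan tm P (\sum_(i <- r) F i).
Proof.
move=> H; elim: r => [|i r IH]; first by rewrite big_nil; exact: tspan0.
by rewrite big_cons; apply: tspanD.
Qed.



Lemma tspan_subspace (V W : lmodType k) (P : V -> W -> Prop) :
  (forall a v w, P v w -> P (a *: v) w) -> subspace (tspan tm P).
Proof.
move=> HP; split; first exact: tspan0.
move=> a u v [s [Ps ->]] Hv; apply: tspanD => //.
exists [seq (a *: p.1, p.2) | p <- s]; split.
  by move=> p /mapP [q /Ps Hq ->] /=; apply: HP.
by rewrite big_map scaler_sumr; apply: eq_bigr => p _; rewrite tmZl.
Qed.

Lemma tspan_subspace_r (V W : lmodType k) (P : V -> W -> Prop) :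
  (forall a v w, P v w -> P v (a *: w)) -> subspace (tspan tm P).
Proof.
move=> HP; split; first exact: tspan0.
move=> a u v [s [Ps ->]] Hv; apply: tspanD => //.
exists [seq (p.1, a *: p.2) | p <- s]; split.
  by move=> p /mapP [q /Ps Hq ->] /=; apply: HP.
by rewrite big_map scaler_sumr; apply: eq_bigr => p _; rewrite tmZr.
Qed.

Lemma tspan_mono (V W : lmodType k) (P Q : V -> W -> Prop) x :
  (forall v w, P v w -> Q v w) -> tspan tm P x -> tspan tm Q x.
Proof. by move=> H [s [Ps ->]]; exists s; split => // p /Ps /H. Qed.

Section Span.
Variables (V W : lmodType k).
Definition spanP : {pred tens V W} := fun X => `[< tspan tm (fun _ _ => True) X >].

Lemma span_closed : subsemimod_closed spanP.
Proof.
have S := @tspan_subspace V W (fun _ _ => True) (fun _ _ _ _ => I).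
split; first split.
- by apply/asboolP; exact: tspan0.
- by move=> x y /asboolP Hx /asboolP Hy; apply/asboolP; apply: tspanD.
- move=> a x /asboolP Hx; apply/asboolP.
  by have := S.2 a x 0 Hx (tspan0 _); rewrite addr0.
Qed.

HB.instance Definition _ :=
  GRing.isSubmodClosed.Build k (tens V W) spanP span_closed.
Record spanT := SpanT { spval :> tens V W ; _ : spval \in spanP }.
HB.instance Definition _ := [isSub for spval].
HB.instance Definition _ := [Choice of spanT by <:].
HB.instance Definition _ := [SubChoice_isSubLmodule of spanT by <:].

Lemma tens_span (X : tens V W) : tspan tm (fun _ _ => True) X.
Proof.
have mem v w : v *t w \in spanP by apply/asboolP; exact: tspan_tm.
pose f v w : spanT := SpanT (mem v w).
have Hf : is_bilin f.
  split=> [w|v] a u u'; apply: val_inj => /=.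
    by rewrite tmDl tmZl.
  by rewrite tmDr tmZr.
pose g := tlift tm f.
have Hg : is_lin (fun x => spval (g x)).
  by move=> a u v; rewrite /g (tlift_lin Hf).
have E := tens_ext Hg (@lin_id _ _) (fun v w => congr1 spval (tlift_tm Hf v w)).
have := E X => /= <-; case: (g X) => /= y; by move/asboolP.
Qed.

Lemma tens_sum (X : tens V W) :
  exists s : seq (V * W), X = \sum_(p <- s) p.1 *t p.2.
Proof. by have [s [_ ->]] := tens_span X; exists s. Qed.
End Span.



Lemma bilin_comb (U V W : lmodType k) (f g : U -> V -> W) (c : k) :
  is_bilin f -> is_bilin g -> is_bilin (fun u v => c *: f u v + g u v).
Proof.
move=> [f1 f2] [g1 g2]; split=> [v|u].
  exact: (lin_lincomb c (f1 v) (g1 v)).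
exact: (lin_lincomb c (f2 u) (g2 u)).
Qed.

Lemma bilin_zero (U V W : lmodType k) : is_bilin (fun (_ : U) (_ : V) => (0 : W)).
Proof. by split=> *; exact: lin_zero. Qed.

Lemma bilin_scale (U V W : lmodType k) (f : U -> V -> W) (c : k) :
  is_bilin f -> is_bilin (fun u v => c *: f u v).
Proof. by move=> [f1 f2]; split=> *; apply: lin_scale. Qed.

Lemma bilin_sum (U V W : lmodType k) (I : Type) (r : seq I) (F : I -> U -> V -> W) :
  (forall i, is_bilin (F i)) -> is_bilin (fun u v => \sum_(i <- r) F i u v).
Proof.
move=> HF; split=> [v|u].
  by apply: lin_sumf => i; exact: (HF i).1.
by apply: lin_sumf => i; exact: (HF i).2.
Qed.

Lemma bilin_comp (U V W X : lmodType k) (h : W -> X) (f : U -> V -> W) :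
  is_lin h -> is_bilin f -> is_bilin (fun u v => h (f u v)).
Proof.
move=> Hh [f1 f2]; split=> [v|u].
  exact: (lin_comp Hh (f1 v)).
exact: (lin_comp Hh (f2 u)).
Qed.

Lemma bilin_mul (U V : lmodType k) (f : U -> k^o) (g : V -> k^o) :
  is_lin f -> is_lin g -> is_bilin (fun u v => (f u * g v : k^o)).
Proof.
move=> Hf Hg; split=> [v|u] a x y.
  by rewrite Hf /GRing.scale /=; ring.
by rewrite Hg /GRing.scale /=; ring.
Qed.

Lemma bilin_tm (U V U' V' : lmodType k) (f : U -> U') (g : V -> V') :
  is_lin f -> is_lin g -> is_bilin (fun u v => f u *t g v).
Proof.
move=> Hf Hg; split=> [v|u] a x y.
  by rewrite Hf tmDl tmZl.
by rewrite Hg tmDr tmZr.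
Qed.

Lemma bilin_swap (U V W : lmodType k) (f : U -> V -> W) :
  is_bilin f -> is_bilin (fun v u => f u v).
Proof. by move=> [f1 f2]; split. Qed.

Lemma tlift_comb (V W X : lmodType k) (f g : V -> W -> X) (c : k) :
  is_bilin f -> is_bilin g -> forall x,
  tlift tm (fun v w => c *: f v w + g v w) x = c *: tlift tm f x + tlift tm g x.
Proof.
move=> Hf Hg x; symmetry.
apply: (tlift_uniq (g := fun x => c *: tlift tm f x + tlift tm g x)); first exact: bilin_comb.
  exact: (lin_lincomb c (tlift_lin Hf) (tlift_lin Hg)).
by move=> v w; rewrite !tlift_tm.
Qed.

Lemma tlift_comp (V W X Y : lmodType k) (h : X -> Y) (f : V -> W -> X) :
  is_lin h -> is_bilin f -> forall x,
  h (tlift tm f x) = tlift tm (fun v w => h (f v w)) x.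
Proof.
move=> Hh Hf x; apply: (tlift_uniq (g := fun x => h (tlift tm f x))); first exact: bilin_comp.
  exact: (lin_comp Hh (tlift_lin Hf)).
by move=> v w; rewrite tlift_tm.
Qed.

Lemma tlift_zero (V W X : lmodType k) x :
  tlift tm (fun (_ : V) (_ : W) => (0 : X)) x = 0.
Proof.
symmetry; apply: (tlift_uniq (g := fun _ => 0)); first exact: bilin_zero.
  exact: lin_zero.
by [].
Qed.

Lemma tlift_scale (V W X : lmodType k) (f : V -> W -> X) (c : k) :
  is_bilin f -> forall x, tlift tm (fun v w => c *: f v w) x = c *: tlift tm f x.
Proof.
move=> Hf x; have := tlift_comb c Hf (@bilin_zero V W X) x.
by rewrite tlift_zero addr0; under eq_fun do under eq_fun do rewrite addr0.
Qed.

Lemma tlift_sumf (V W X : lmodType k) (I : Type) (r : seq I) (F : I -> V -> W -> X) :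
  (forall i, is_bilin (F i)) -> forall x,
  tlift tm (fun v w => \sum_(i <- r) F i v w) x = \sum_(i <- r) tlift tm (F i) x.
Proof.
move=> HF x; symmetry.
apply: (tlift_uniq (g := fun x => \sum_(i <- r) tlift tm (F i) x)); first exact: bilin_sum.
  by apply: lin_sumf => i; exact: tlift_lin.
by move=> v w; apply: eq_bigr => i _; rewrite tlift_tm.
Qed.

Lemma tlift_ext (V W X : lmodType k) (f g : V -> W -> X) :
  (forall v w, f v w = g v w) -> tlift tm f = tlift tm g.
Proof. by move=> E; congr tlift; apply: funext => v; apply: funext => w. Qed.

Section Nondeg.
Variables (V W : lmodType k) (S T : Type) (eV : V -> S -> k) (eW : W -> T -> k).
Hypothesis HV : forall s, is_lin (fun v => (eV v s : k^o)).
Hypothesis HW : forall t, is_lin (fun w => (eW w t : k^o)).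
Hypothesis IV : forall v, (forall s, eV v s = 0) -> v = 0.
Hypothesis IW : forall w, (forall t, eW w t = 0) -> w = 0.

Lemma nondeg_list n (l : seq (V * W)) : size l = n ->
  (forall s t, \sum_(p <- l) eV p.1 s * eW p.2 t = 0) ->
  \sum_(p <- l) p.1 *t p.2 = 0.
Proof.
elim: n l => [|n IH] [|[v w] l] //=; first by rewrite big_nil.
move=> [Hs] Hsum; rewrite big_cons /=.
have [W0|] := pselect (forall t, eW w t = 0).
  have w0 := IW W0; rewrite w0 tm0r add0r; apply: (IH l Hs) => s t.
  by have := Hsum s t; rewrite big_cons /= W0 mulr0 add0r.
move=> /existsNP [t0 Ht0].
set c := eW w t0.
have cn0 : c != 0 by apply/eqP.
pose d (p : V * W) := eW p.2 t0 / c.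
have Ev : v = - \sum_(p <- l) d p *: p.1.
  apply/eqP; rewrite -subr_eq0 opprK; apply/eqP; apply: IV => s.
  have Lin := HV s.
  rewrite (linD Lin) (lin_sum Lin).
  have := Hsum s t0; rewrite big_cons /= -/c => H.
  have -> : \sum_(p <- l) (eV (d p *: p.1) s : k^o) = \sum_(p <- l) eV p.1 s * eW p.2 t0 / c.
    by apply: eq_bigr => p _; rewrite (linZ Lin) scaleoE /d mulrC mulrA.
  rewrite -mulr_suml.
  have -> : (eV v s : k^o) = eV v s * c / c by rewrite mulfK.
  by rewrite -mulrDl H mul0r.
pose l' := [seq (p.1, p.2 - d p *: w) | p <- l].
have Hs' : size l' = n by rewrite size_map.
have Hsum' : forall s t, \sum_(p <- l') eV p.1 s * eW p.2 t = 0.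
  move=> s t; rewrite big_map /=.
  have LinW := HW t.
  under eq_bigr do rewrite (linB LinW) (linZ LinW) scaleoE mulrBr.
  rewrite sumrB.
  have -> : \sum_(p <- l) eV p.1 s * (d p * eW w t) = - (eV v s * eW w t).
    rewrite Ev (linN (HV s)) (lin_sum (HV s)) mulNr opprK mulr_suml.
    by apply: eq_bigr => p _; rewrite (linZ (HV s)) scaleoE; ring.
  by rewrite opprK addrC; have := Hsum s t; rewrite big_cons.
have := IH l' Hs' Hsum'; rewrite big_map /=.
under eq_bigr do rewrite tmDr tmNr tmZr.
rewrite sumrB.
have -> : \sum_(p <- l) d p *: p.1 *t w = (\sum_(p <- l) d p *: p.1) *t w.
  by rewrite tm_suml; apply: eq_bigr => p _; rewrite tmZl.
by rewrite -tmNl -Ev addrC => ->.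
Qed.

Lemma nondeg (X : tens V W) :
  (forall s t, tlift tm (fun v w => (eV v s * eW w t : k^o)) X = 0) -> X = 0.
Proof.
have [l ->] := tens_sum X => H.
apply: (nondeg_list (erefl _)) => s t.
have Hb := bilin_mul (HV s) (HW t).
have := H s t; rewrite (lin_sum (tlift_lin Hb)).
by under eq_bigr do rewrite (tlift_tm Hb).
Qed.
End Nondeg.

Lemma zid (V : zmodType) (x a A B : V) : x - (a + A) + (a + B) = x - (A - B).
Proof. by rewrite -addrA opprD addrACA addNr add0r opprB [B - A]addrC. Qed.

Section Sub.
Variables (V : lmodType k) (U : set V) (HU : subspace U).
Lemma sub0 : U 0. Proof. by case: HU. Qed.
Lemma subD x y : U x -> U y -> U (x + y).
Proof. by move=> Hx Hy; have := HU.2 1 x y Hx Hy; rewrite scale1r. Qed.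
Lemma subZ a x : U x -> U (a *: x).
Proof. by move=> Hx; have := HU.2 a x 0 Hx sub0; rewrite addr0. Qed.
Lemma subN x : U x -> U (- x).
Proof. by move=> Hx; rewrite -scaleN1r; apply: subZ. Qed.
Lemma subB x y : U x -> U y -> U (x - y).
Proof. by move=> Hx Hy; apply: subD => //; apply: subN. Qed.
Lemma sub_sum (I : Type) (r : seq I) (F : I -> V) :
  (forall i, U (F i)) -> U (\sum_(i <- r) F i).
Proof.
move=> H; elim: r => [|i r IH]; first by rewrite big_nil; apply: sub0.
by rewrite big_cons; apply: subD.
Qed.
End Sub.

Lemma subspaceT (V : lmodType k) : subspace (@setT V).
Proof. by []. Qed.

Lemma subspace_ker (V W : lmodType k) (f : V -> W) :
  is_lin f -> subspace (fun x => f x = 0).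
Proof. by move=> Hf; split; [exact: lin0|move=> a u v /= Hu Hv; rewrite Hf Hu Hv scaler0 addr0]. Qed.

Lemma fin_span n (V : lmodType k) (p : V -> 'rV[k]_n) (S : set V) :
  subspace S ->
  exists r (xs : 'I_r -> V), (forall i, S (xs i)) /\
   forall x, S x -> exists u : 'I_r -> k, p x = \sum_i u i *: p (xs i).
Proof.
move=> HS.
pose Q m := exists r (M : 'M[k]_(r, n)),
  (forall i, exists x, S x /\ row i M = p x) /\ \rank M = m.
pose Pb : pred nat := fun m => `[< Q m >].
have ex : exists m, Pb m.
  exists 0%N; apply/asboolP; exists 0%N, 0; split; first by case.
  by apply/eqP; rewrite -leqn0 rank_leq_row.
have ub : forall m, Pb m -> (m <= n)%N.
  by move=> m /asboolP [r [M [_ <-]]]; exact: rank_leq_col.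
case: (ex_maxnP ex ub) => m /asboolP [r [M [HM Hrk]]] Hmax.
have /fin_all_exists [xs Hxs] := HM.
exists r, xs; split; first by move=> i; case: (Hxs i).
move=> x Sx.
have sub : (p x <= M)%MS.
  apply/negPn/negP => Hn.
  have QQ : Pb (\rank (col_mx M (p x))).
    apply/asboolP; exists (r + 1)%N, (col_mx M (p x)); split => // i.
    case: (splitP i) => j Ej.
      have -> : i = lshift 1 j by apply/val_inj.
      by rewrite rowKu; case: (Hxs j) => Sj ->; exists (xs j).
    have -> : i = rshift r j by apply/val_inj.
    by rewrite rowKd row_id; exists x.
  have := Hmax _ QQ; rewrite -addsmxE -Hrk.
  have : (M < M + p x)%MS by rewrite ltmxE addsmxSl addsmx_sub submx_refl.
  by rewrite ltmxErank => /andP [_ lt] le; move: (leq_trans lt le); rewrite ltnn.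
have [u Hu] := submxP sub.
exists (fun i => u 0 i); rewrite Hu mulmx_sum_row; apply: eq_bigr => i _.
by case: (Hxs i) => _ ->.
Qed.

Lemma fin_codim_cospan (V : lmodType k) (U : set V) (S : set V) :
  fin_codim U -> subspace S ->
  exists r (xs : 'I_r -> V), (forall i, S (xs i)) /\
    forall x, S x -> exists u : 'I_r -> k, U (x - \sum_i u i *: xs i).
Proof.
move=> [n [p [Hp HpU]]] HS.
have [r [xs [Sxs Hxs]]] := fin_span p HS.
exists r, xs; split => // x Sx; have [u Hu] := Hxs x Sx.
exists u; apply/HpU; rewrite (linB Hp) (lin_sum Hp) Hu.
by apply/eqP; rewrite subr_eq0; apply/eqP; apply: eq_bigr => i _; rewrite (linZ Hp).
Qed.

Definition coordsys (V : lmodType k) (U : set V) M (e : 'I_M -> V)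
  (p : V -> 'rV[k]_M) :=
  is_lin p /\ (forall x, U (x - \sum_i p x 0 i *: e i)) /\
  (forall x, U x <-> p x = 0).

Lemma cospan_coord (V : lmodType k) (U : set V) N (e : 'I_N -> V) :
  subspace U -> (forall x, exists u : 'I_N -> k, U (x - \sum_i u i *: e i)) ->
  exists M (e' : 'I_M -> V) (p : V -> 'rV[k]_M), coordsys U e' p.
Proof.
move=> HU He.
pose P N := exists e : 'I_N -> V,
  forall x, exists u : 'I_N -> k, U (x - \sum_i u i *: e i).
pose Pb : pred nat := fun N => `[< P N >].
have ex : exists N, Pb N by exists N; apply/asboolP; exists e.
case: (ex_minnP ex) => M /asboolP [e' He'] Hmin.
have uniq0 : forall t : 'I_M -> k, U (\sum_i t i *: e' i) -> forall i, t i = 0.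
  move=> t Ht j; apply/eqP/negPn/negP => tj.
  move: e' He' Hmin t Ht j tj; case: M => [|M'] e' He' Hmin t Ht j tj; first by case: (j).
  suff : Pb M' by move/Hmin; rewrite ltnn.
  apply/asboolP; exists (fun i => e' (lift j i)) => x.
  have [u Hu] := He' x.
  exists (fun i => u (lift j i) - u j * t (lift j i) / t j).
  have := subD HU Hu (subZ HU (u j / t j) Ht).
  rewrite (bigD1_ord j) //= (bigD1_ord j (P := xpredT)) //=.
  move=> H; apply: (eq_ind _ U H).
  rewrite scalerDr scalerA divfK //.
  have -> : \sum_(i < M') (u (lift j i) - u j * t (lift j i) / t j) *: e' (lift j i)
     = \sum_(i < M') u (lift j i) *: e' (lift j i)
       - (u j / t j) *: \sum_(i < M') t (lift j i) *: e' (lift j i).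
    rewrite scaler_sumr -sumrB; apply: eq_bigr => i _.
    by rewrite scalerBl scalerA mulrAC.
  exact: zid.
have uniq : forall x (u v : 'I_M -> k), U (x - \sum_i u i *: e' i) ->
    U (x - \sum_i v i *: e' i) -> u = v.
  move=> x u v Hu Hv; apply: funext => i; apply/eqP; rewrite -subr_eq0; apply/eqP.
  apply: (uniq0 (fun i => u i - v i)) => //.
  have := subB HU Hv Hu; congr U.
  rewrite opprB addrC addrA addrNK -sumrB; apply: eq_bigr => j _.
  by rewrite scalerBl.
have [pf Hpf] := choice He'.
pose p x : 'rV[k]_M := \row_i pf x i.
have pE x i : p x 0 i = pf x i by rewrite mxE.
exists M, e', p; split; last split.
- move=> a x y; apply/rowP => i; rewrite !mxE.
  have := uniq (a *: x + y) (pf (a *: x + y)) (fun i => a * pf x i + pf y i).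
  move=> /(_ (Hpf _)) -> //.
  have := HU.2 a _ _ (Hpf x) (Hpf y); congr U.
  have -> : \sum_j (a * pf x j + pf y j) *: e' j =
     a *: \sum_j pf x j *: e' j + \sum_j pf y j *: e' j.
    by rewrite scaler_sumr -big_split; apply: eq_bigr => j _; rewrite scalerDl scalerA.
  by rewrite scalerBr opprD addrACA.
- by move=> x; under eq_bigr do rewrite pE; exact: Hpf.
- move=> x; split => [Ux|].
    apply/rowP => i; rewrite pE mxE.
    have := uniq x (pf x) (fun _ => 0) (Hpf x).
    by rewrite big1 ?subr0 // => [/(_ Ux) ->|i' _]; rewrite ?scale0r.
  move=> p0; have := Hpf x; congr U; rewrite big1 ?subr0 // => i _.
  by rewrite -pE p0 mxE scale0r.
Qed.

Lemma fin_codim_coord (V : lmodType k) (U : set V) :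
  subspace U -> fin_codim U ->
  exists M (e : 'I_M -> V) (p : V -> 'rV[k]_M), coordsys U e p.
Proof.
move=> HU HF; have [r [xs [_ Hxs]]] := fin_codim_cospan HF (@subspaceT V).
by apply: (cospan_coord HU (e := xs)) => x; apply: Hxs.
Qed.

Lemma coord_fin_codim (V : lmodType k) (U : set V) M (e : 'I_M -> V) p :
  coordsys U e p -> fin_codim U.
Proof. by move=> [Hp [_ HpU]]; exists M, p. Qed.

Lemma coord_lin (V : lmodType k) (U : set V) M (e : 'I_M -> V) p i :
  coordsys U e p -> is_lin (fun x => (p x 0 i : k^o)).
Proof. by move=> [Hp _] a x y; rewrite Hp !mxE. Qed.

Lemma coord_vanish (V : lmodType k) (U : set V) M (e : 'I_M -> V) p i x :
  coordsys U e p -> U x -> p x 0 i = 0.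
Proof. by move=> [_ [_ HpU]] /HpU ->; rewrite mxE. Qed.

Lemma coord_rep (V W : lmodType k) (U : set V) M (e : 'I_M -> V) p (f : V -> W) :
  subspace U -> coordsys U e p -> is_lin f -> (forall x, U x -> f x = 0) ->
  forall x, f x = \sum_i p x 0 i *: f (e i).
Proof.
move=> HU [_ [He _]] Hf Hf0 x.
have := Hf0 _ (He x); rewrite (linB Hf) (lin_sum Hf) => /eqP; rewrite subr_eq0 => /eqP ->.
by apply: eq_bigr => i _; rewrite (linZ Hf).
Qed.

Lemma tlift_lin_param (P V W X : lmodType k) (F : P -> V -> W -> X) :
  (forall q, is_bilin (F q)) -> (forall v w, is_lin (fun q => F q v w)) ->
  forall x, is_lin (fun q => tlift tm (F q) x).
Proof.
move=> HF HL x a q q'.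
rewrite (tlift_ext (g := fun v w => a *: F q v w + F q' v w)); last by move=> v w; rewrite HL.
by rewrite tlift_comb.
Qed.

Lemma bilin_param (P V W X : lmodType k) (F : P -> V -> W -> X) :
  (forall q, is_bilin (F q)) -> (forall v w, is_lin (fun q => F q v w)) ->
  (forall q, is_lin (fun x => tlift tm (F q) x)) /\
  (forall x, is_lin (fun q => tlift tm (F q) x)).
Proof. by move=> HF HL; split=> [q|x]; [exact: tlift_lin|exact: tlift_lin_param]. Qed.

Section FD.
Variables (R : lmodType k) (mul : R -> R -> R).

Definition mkF (f : R -> k^o) (H : in_fdual mul f) : fdual mul :=
  @FDual _ _ mul f (introT (asboolP _) H).

Lemma mkFE f (H : in_fdual mul f) x : fdval (mkF H) x = f x.
Proof. by []. Qed.

Lemma fdvalP (g : fdual mul) : in_fdual mul (fdval g).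
Proof. by case: g => f /= /asboolP. Qed.

Lemma fd_lin (g : fdual mul) : is_lin (fdval g).
Proof. by case: (fdvalP g). Qed.

Lemma ev_lin x : is_lin (fun g : fdual mul => (fdval g x : k^o)).
Proof. by []. Qed.

Lemma fd_inj (g : fdual mul) : (forall x, fdval g x = 0) -> g = 0.
Proof. by move=> H; apply: val_inj; apply: funext => x /=; rewrite H. Qed.

Lemma fd_eq (g h : fdual mul) : (forall x, fdval g x = fdval h x) -> g = h.
Proof. by move=> H; apply: val_inj; apply: funext => x /=; rewrite H. Qed.

Hypothesis Hmul : is_bilin mul.

Lemma pair2_bilin x y :
  is_bilin (fun g h : fdual mul => (fdval g x * fdval h y : k^o)).
Proof. exact: bilin_mul (ev_lin x) (ev_lin y). Qed.

Lemma pair2_tm (g h : fdual mul) x y :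
  fd_pair2 tm (g *t h) x y = fdval g x * fdval h y.
Proof. by rewrite /fd_pair2 (tlift_tm (pair2_bilin x y)). Qed.

Lemma pair2_linZ x y : is_lin (fun Z : tens (fdual mul) (fdual mul) => fd_pair2 tm Z x y).
Proof. exact: (tlift_lin (pair2_bilin x y)). Qed.

Lemma coord_in_fdual (I : set R) M (e : 'I_M -> R) p i :
  cof_ideal mul I -> coordsys I e p -> in_fdual mul (fun x => (p x 0 i : k^o)).
Proof.
move=> HI Hc; split; first exact: coord_lin Hc.
by exists I; split => // x Ix; apply: coord_vanish Hc Ix.
Qed.

Lemma cof_coord (I : set R) : cof_ideal mul I ->
  exists M (e : 'I_M -> R) (p : R -> 'rV[k]_M), coordsys I e p.
Proof. by move=> [[HI _] Hf]; apply: fin_codim_coord. Qed.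

Lemma fd_delta_ex (f : fdual mul) :
  exists Z : tens (fdual mul) (fdual mul), forall x y, fd_pair2 tm Z x y = fdval f (mul x y).
Proof.
have [Hf [J [HJ fJ]]] := fdvalP f.
have [M [e [p Hc]]] := cof_coord HJ.
have [[HJs HJI] _] := HJ.
pose c i := mkF (coord_in_fdual i HJ Hc).
exists (\sum_i \sum_j fdval f (mul (e i) (e j)) *: (c i *t c j)) => x y.
rewrite (lin_sum (pair2_linZ x y)).
under eq_bigr do rewrite (lin_sum (pair2_linZ x y)).
under eq_bigr do under eq_bigr do rewrite (linZ (pair2_linZ x y)) pair2_tm !mkFE.
have lin1 : forall y, is_lin (fun x => fdval f (mul x y)).
  by move=> y'; apply: lin_comp (Hmul.1 y'); exact: fd_lin.
have lin2 : forall x, is_lin (fun y => fdval f (mul x y)).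
  by move=> x'; apply: lin_comp (Hmul.2 x'); exact: fd_lin.
have van1 : forall y x, J x -> fdval f (mul x y) = 0.
  by move=> y' x' Jx; apply: fJ; case: (HJI y' x' Jx).
have van2 : forall x y, J y -> fdval f (mul x y) = 0.
  by move=> x' y' Jy; apply: fJ; case: (HJI x' y' Jy).
rewrite (coord_rep HJs Hc (lin1 y) (van1 y) x).
apply: eq_bigr => i _.
rewrite (coord_rep HJs Hc (lin2 (e i)) (van2 (e i)) y) scaleoE mulr_sumr.
by apply: eq_bigr => j _; rewrite /GRing.scale /=; ring.
Qed.

Lemma fd_deltaP (f : fdual mul) x y :
  fd_pair2 tm (fd_delta tm f) x y = fdval f (mul x y).
Proof.
have [Z HZ] := fd_delta_ex f.
rewrite /fd_delta; move: x y.
exact: (ClassicalEpsilon.epsilon_spec (inhabits 0) (fun Z : tens (fdual mul) (fdual mul) => forall x y, fd_pair2 tm Z x y = fdval f (mul x y)) (ex_intro _ Z HZ)).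
Qed.

End FD.

Lemma mul_bilin (A : algType k) : is_bilin (@GRing.mul A).
Proof.
split=> [y|x] a u v; first by rewrite mulrDl scalerAl.
by rewrite mulrDr scalerAr.
Qed.

Lemma ev_mul_lin (R : lmodType k) (mul : R -> R -> R) (x : R) (c : k) :
  is_lin (fun g : fdual mul => (fdval g x * c : k^o)).
Proof. by move=> a u v; have /= -> := ev_lin x a u v; rewrite /GRing.scale /=; ring. Qed.
Lemma ev_mul_lin' (R : lmodType k) (mul : R -> R -> R) (x : R) (c : k) :
  is_lin (fun g : fdual mul => (c * fdval g x : k^o)).
Proof. by move=> a u v; have /= -> := ev_lin x a u v; rewrite /GRing.scale /=; ring. Qed.

Section TP.
Variables A B : algType k.

Lemma fab_bilin (f : fdualA A) (g : fdualA B) :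
  is_bilin (fun a b => (fdval f a * fdval g b : k^o)).
Proof. exact: bilin_mul (fd_lin f) (fd_lin g). Qed.

Lemma tp_inner_bilin (X : tens A B) :
  is_bilin (fun (f : fdualA A) (g : fdualA B) =>
    tlift tm (fun a b => (fdval f a * fdval g b : k^o)) X).
Proof.
split=> [g|f].
  apply: (tlift_lin_param (F := fun f a b => (fdval f a * fdval g b : k^o))).
    by move=> f; exact: fab_bilin.
  by move=> a b; exact: ev_mul_lin.
apply: (tlift_lin_param (F := fun g a b => (fdval f a * fdval g b : k^o))).
  by move=> g; exact: fab_bilin.
by move=> a b; exact: ev_mul_lin'.
Qed.

Lemma tpair_lin_xi (X : tens A B) :
  is_lin (fun xi : tens (fdualA A) (fdualA B) => tpair tm xi X).
Proof. exact: tlift_lin (tp_inner_bilin X). Qed.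

Lemma tpair_lin_X (xi : tens (fdualA A) (fdualA B)) :
  is_lin (fun X : tens A B => tpair tm xi X).
Proof.
apply: (tlift_lin_param (F := fun X f g =>
   tlift tm (fun a b => (fdval f a * fdval g b : k^o)) X)).
  exact: tp_inner_bilin.
by move=> f g; exact: tlift_lin (fab_bilin f g).
Qed.

Lemma tpair_tm_l (f : fdualA A) (g : fdualA B) X :
  tpair tm (f *t g) X = tlift tm (fun a b => (fdval f a * fdval g b : k^o)) X.
Proof. by rewrite /tpair (tlift_tm (tp_inner_bilin X)). Qed.

Lemma tpair_tm_r (xi : tens (fdualA A) (fdualA B)) a b :
  tpair tm xi (a *t b) = tlift tm (fun f g => (fdval f a * fdval g b : k^o)) xi.
Proof.
rewrite /tpair; congr (tlift tm _ xi); apply: funext => f; apply: funext => g.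
by rewrite (tlift_tm (fab_bilin f g)).
Qed.

Lemma tpair_tmtm (f : fdualA A) (g : fdualA B) a b :
  tpair tm (f *t g) (a *t b) = fdval f a * fdval g b.
Proof. by rewrite tpair_tm_l (tlift_tm (fab_bilin f g)). Qed.

Lemma tpair_nondeg (xi : tens (fdualA A) (fdualA B)) :
  (forall a b, tpair tm xi (a *t b) = 0) -> xi = 0.
Proof.
move=> H; apply: (nondeg (eV := fun (f : fdualA A) a => fdval f a)
                         (eW := fun (g : fdualA B) b => fdval g b)).
- by move=> a; exact: ev_lin.
- by move=> b; exact: ev_lin.
- exact: fd_inj.
- exact: fd_inj.
by move=> a b; rewrite -tpair_tm_r.
Qed.

Lemma tpair_inj (xi xi' : tens (fdualA A) (fdualA B)) :
  (forall a b, tpair tm xi (a *t b) = tpair tm xi' (a *t b)) -> xi = xi'.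
Proof.
move=> H; apply/eqP; rewrite -subr_eq0; apply/eqP; apply: tpair_nondeg => a b.
by rewrite (linB (tpair_lin_xi _)) H subrr.
Qed.

Lemma tpair_eqX (xi : tens (fdualA A) (fdualA B)) (F : tens A B -> k^o) :
  is_lin F -> (forall a b, tpair tm xi (a *t b) = F (a *t b)) ->
  forall X, tpair tm xi X = F X.
Proof. by move=> HF H; apply: tens_ext => //; exact: tpair_lin_X. Qed.

End TP.

Section TMap.
Variables (U V U' V' : lmodType k) (f : U -> U') (g : V -> V').
Hypotheses (Hf : is_lin f) (Hg : is_lin g).
Lemma tmap_tm u v : tmap tm f g (u *t v) = f u *t g v.
Proof. exact: (tlift_tm (bilin_tm Hf Hg)). Qed.
Lemma tmap_lin : is_lin (tmap tm f g).
Proof. exact: (tlift_lin (bilin_tm Hf Hg)). Qed.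
Lemma tmap_span X :
  tspan tm (fun u' v' => exists u v, u' = f u /\ v' = g v) (tmap tm f g X).
Proof.
have [l ->] := tens_sum X; rewrite (lin_sum tmap_lin).
by apply: tspan_sum => p; rewrite tmap_tm; apply: tspan_tm; exists p.1, p.2.
Qed.
End TMap.

Lemma tmap_ext (U V U' V' : lmodType k) (f f' : U -> U') (g g' : V -> V') :
  (forall u, f u = f' u) -> (forall v, g v = g' v) -> tmap tm f g = tmap tm f' g'.
Proof. by move=> Ef Eg; rewrite (funext Ef) (funext Eg). Qed.

Lemma tmap_id (U V : lmodType k) (X : tens U V) : tmap tm id id X = X.
Proof.
by apply: (tens_ext (tmap_lin (@lin_id _ U) (@lin_id _ V)) (@lin_id _ _)) => u v; rewrite tmap_tm.
Qed.

Lemma lmul_lin (A : algType k) (a : A) : is_lin (fun x : A => a * x).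
Proof. by move=> c u v; rewrite mulrDr scalerAr. Qed.
Lemma rmul_lin (A : algType k) (b : A) : is_lin (fun x : A => x * b).
Proof. by move=> c u v; rewrite mulrDl scalerAl. Qed.

Section Twist.
Variables (A B : algType k) (tau : tens B A -> tens A B).
Hypothesis Htau : is_twisting tm tau.
Variables (A0 : set A) (B0 : set B).
Hypothesis HA0 : subalg A0.
Hypothesis HB0 : subalg B0.
Hypothesis HresA : forall X, tspan tm (fun (b : B) (a : A) => A0 a) X ->
             tau X = tswap tm X.
Hypothesis HresB : forall X, tspan tm (fun (b : B) (a : A) => B0 b) X ->
             tau X = tswap tm X.

Local Notation tmul := (twisted_mul tm tau).

Lemma tau_lin : is_lin tau. Proof. by case: Htau. Qed.

Lemma tswap_tm (b : B) (a : A) : tswap tm (b *t a) = a *t b.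
Proof. by rewrite /tswap (tlift_tm (bilin_swap (@tm_bilin A B))). Qed.

Lemma tau_A0 (b : B) (a : A) : A0 a -> tau (b *t a) = a *t b.
Proof. by move=> Ha; rewrite HresA ?tswap_tm //; apply: tspan_tm. Qed.
Lemma tau_B0 (b : B) (a : A) : B0 b -> tau (b *t a) = a *t b.
Proof. by move=> Hb; rewrite HresB ?tswap_tm //; apply: tspan_tm. Qed.
Lemma tau_1a (a : A) : tau (1 *t a) = a *t 1.
Proof. by apply: tau_B0; case: HB0. Qed.
Lemma tau_b1 (b : B) : tau (b *t 1) = 1 *t b.
Proof. by apply: tau_A0; case: HA0. Qed.

Definition tin (a : A) (b : B) (a' : A) (b' : B) : tens A B :=
  tmap tm (fun x => a * x) (fun y => y * b') (tau (b *t a')).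

Lemma tmap_lin_g (U V U' V' : lmodType k) (P : lmodType k) (f : U -> U')
  (G : P -> V -> V') (X : tens U V) :
  is_lin f -> (forall q, is_lin (G q)) -> (forall v, is_lin (fun q => G q v)) ->
  is_lin (fun q => tmap tm f (G q) X).
Proof.
move=> Hf HG HGq; apply: (tlift_lin_param (F := fun q u v => f u *t G q v)).
  by move=> q; exact: bilin_tm.
by move=> u v; exact: (lin_comp ((@tm_bilin U' V').2 (f u)) (HGq v)).
Qed.

Lemma tmap_lin_f (U V U' V' : lmodType k) (P : lmodType k) (F : P -> U -> U')
  (g : V -> V') (X : tens U V) :
  is_lin g -> (forall q, is_lin (F q)) -> (forall u, is_lin (fun q => F q u)) ->
  is_lin (fun q => tmap tm (F q) g X).
Proof.
move=> Hg HF HFq; apply: (tlift_lin_param (F := fun q u v => F q u *t g v)).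
  by move=> q; exact: bilin_tm.
by move=> u v; exact: (lin_comp ((@tm_bilin U' V').1 (g v)) (HFq u)).
Qed.

Lemma tin_bilin a b : is_bilin (tin a b).
Proof.
split=> [b'|a'].
  apply: (lin_comp (tmap_lin (lmul_lin a) (rmul_lin b'))).
  exact: (lin_comp tau_lin ((@tm_bilin B A).2 b)).
apply: (tmap_lin_g (G := fun b' y => y * b')) => [|q|v]; first exact: lmul_lin.
  exact: rmul_lin.
exact: lmul_lin.
Qed.

Lemma tout_bilin : is_bilin (fun a b => tlift tm (tin a b)).
Proof.
split=> [b|a] c u v; apply: funext => X /=.
  rewrite (tlift_ext (g := fun a' b' => c *: tin u b a' b' + tin v b a' b')).
    by rewrite tlift_comb //; exact: tin_bilin.
  move=> a' b'; rewrite /tin.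
  exact: (tmap_lin_f (F := fun q x => q * x)) (rmul_lin _) (@lmul_lin _) (@rmul_lin _ ) c u v.
rewrite (tlift_ext (g := fun a' b' => c *: tin a u a' b' + tin a v a' b')).
  by rewrite tlift_comb //; exact: tin_bilin.
move=> a' b'; rewrite /tin.
by rewrite tmDl tmZl tau_lin (tmap_lin (lmul_lin a) (rmul_lin b')).
Qed.

Lemma tmul_tm a b a' b' :
  tmul (a *t b) (a' *t b') = tmap tm (fun x => a * x) (fun y => y * b') (tau (b *t a')).
Proof.
rewrite /twisted_mul (tlift_tm tout_bilin).
exact: (tlift_tm (tin_bilin a b)).
Qed.

Lemma tmul_linl Y : is_lin (fun X => tmul X Y).
Proof. by move=> c u v; rewrite /twisted_mul (tlift_lin tout_bilin). Qed.

Lemma tmul0l Y : tmul 0 Y = 0. Proof. exact: (lin0 (tmul_linl Y)). Qed.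
Lemma tmulDl X X' Y : tmul (X + X') Y = tmul X Y + tmul X' Y.
Proof. exact: (linD (tmul_linl Y)). Qed.

Lemma tmul_pure_lin a b : is_lin (tmul (a *t b)).
Proof.
have -> : tmul (a *t b) = tlift tm (tin a b).
  by rewrite /twisted_mul (tlift_tm tout_bilin).
exact: tlift_lin (tin_bilin a b).
Qed.

Lemma tmul_linr X : is_lin (tmul X).
Proof.
have [l ->] := tens_sum X; elim: l => [|p l IH].
  by rewrite big_nil => c u v; rewrite !tmul0l scaler0 addr0.
rewrite big_cons => c u v.
rewrite !tmulDl (tmul_pure_lin p.1 p.2) IH scalerDr.
by rewrite -!addrA; congr (_ + _); rewrite addrCA.
Qed.

Lemma tmul_bilin : is_bilin tmul.
Proof. by split=> [Y|X]; [exact: tmul_linl|exact: tmul_linr]. Qed.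

Lemma tmul_assoc : associative tmul.
Proof. by case: Htau => _ []. Qed.

Lemma tmul_x1_ab (x a : A) (b : B) : tmul (x *t 1) (a *t b) = (x * a) *t b.
Proof. by rewrite tmul_tm tau_1a (tmap_tm (lmul_lin x) (rmul_lin b)) mul1r. Qed.

Lemma tmul_ab_1y (a : A) (b y : B) : tmul (a *t b) (1 *t y) = a *t (b * y).
Proof. by rewrite tmul_tm tau_b1 (tmap_tm (lmul_lin a) (rmul_lin y)) mulr1. Qed.

Lemma tmul_1b_a1 (b : B) (a : A) : tmul (1 *t b) (a *t 1) = tau (b *t a).
Proof.
rewrite tmul_tm (tmap_ext (f' := id) (g' := id)) ?tmap_id //.
  exact: mul1r.
exact: mulr1.
Qed.

Lemma tmul_x1_Z (x : A) Z : tmul (x *t 1) Z = tmap tm (fun a => x * a) id Z.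
Proof.
apply: (tens_ext (tmul_linr _) (tmap_lin (lmul_lin x) (@lin_id _ _))) => a b.
by rewrite tmul_x1_ab (tmap_tm (lmul_lin x) (@lin_id _ _)).
Qed.

Lemma tmul_Z_1y (y : B) Z : tmul Z (1 *t y) = tmap tm id (fun b => b * y) Z.
Proof.
apply: (tens_ext (tmul_linl _) (tmap_lin (@lin_id _ _) (rmul_lin y))) => a b.
by rewrite tmul_ab_1y (tmap_tm (@lin_id _ _) (rmul_lin y)).
Qed.

Lemma tmul_Z_c1 (c : A) Z : A0 c -> tmul Z (c *t 1) = tmap tm (fun a => a * c) id Z.
Proof.
move=> Hc.
apply: (tens_ext (tmul_linl _) (tmap_lin (rmul_lin c) (@lin_id _ _))) => a b.
by rewrite tmul_tm tau_A0 // (tmap_tm (rmul_lin c) (@lin_id _ _)) (tmap_tm (lmul_lin a) (rmul_lin 1)) mulr1.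
Qed.

Lemma tmul_1c_Z (c : B) Z : B0 c -> tmul (1 *t c) Z = tmap tm id (fun b => c * b) Z.
Proof.
move=> Hc.
apply: (tens_ext (tmul_linr _) (tmap_lin (@lin_id _ _) (lmul_lin c))) => a b.
by rewrite tmul_tm tau_B0 // (tmap_tm (@lin_id _ _) (lmul_lin c)) (tmap_tm (lmul_lin 1) (rmul_lin b)) mul1r.
Qed.

Lemma tauA (b : B) (a a' : A) : tau (b *t (a * a')) = tmul (tau (b *t a)) (a' *t 1).
Proof.
by rewrite -tmul_1b_a1 -tmul_x1_ab tmul_assoc tmul_1b_a1.
Qed.

Lemma tauB (b b' : B) (a : A) : tau ((b * b') *t a) = tmul (1 *t b) (tau (b' *t a)).
Proof.
by rewrite -tmul_1b_a1 -[1 *t (b * b')]tmul_ab_1y -tmul_assoc tmul_1b_a1.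
Qed.


Lemma sum_enum (R : zmodType) (T : finType) (F : T -> R) :
  \sum_(i < #|T|) F (enum_val i) = \sum_t F t.
Proof. by rewrite -big_enum_val; apply: eq_bigl => t; rewrite inE. Qed.

Lemma cospan_fin (V : lmodType k) (U : set V) (T : finType) (e : T -> V) :
  subspace U -> (forall x, exists u : T -> k, U (x - \sum_i u i *: e i)) ->
  fin_codim U.
Proof.
move=> HU He.
have [|M [e' [p Hc]]] := cospan_coord (e := fun i : 'I_#|T| => e (enum_val i)) HU.
  move=> x; have [u Hu] := He x; exists (fun i => u (enum_val i)).
  move: Hu; congr U; congr (x - _).
  by symmetry; exact: (sum_enum (fun t => u t *: e t)).
exact: coord_fin_codim Hc.
Qed.

Lemma sub_sum_seq (V : lmodType k) (U : set V) (I : eqType) (r : seq I) (F : I -> V) :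
  subspace U -> (forall i, i \in r -> U (F i)) -> U (\sum_(i <- r) F i).
Proof.
move=> HU; elim: r => [|i r IH] H; first by rewrite big_nil; apply: sub0.
rewrite big_cons; apply: subD => //; first by apply: H; rewrite inE eqxx.
by apply: IH => j Hj; apply: H; rewrite inE Hj orbT.
Qed.

Lemma tspan_sum_seq (V W : lmodType k) (P : V -> W -> Prop) (I : eqType) (r : seq I)
  (F : I -> tens V W) :
  (forall i, i \in r -> tspan tm P (F i)) -> tspan tm P (\sum_(i <- r) F i).
Proof.
elim: r => [|i r IH] H; first by rewrite big_nil; apply: tspan0.
rewrite big_cons; apply: tspanD => //; first by apply: H; rewrite inE eqxx.
by apply: IH => j Hj; apply: H; rewrite inE Hj orbT.
Qed.

Definition gen_ideal (R : algType k) (S : set R) : set R :=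
  fun a => exists l : seq (R * R * R), (forall t, t \in l -> S t.1.2) /\
    a = \sum_(t <- l) t.1.1 * t.1.2 * t.2.

Lemma gi_subspace (R : algType k) (S : set R) : subspace (gen_ideal S).
Proof.
split; first by exists [::]; rewrite big_nil.
move=> a u v [l [Hl ->]] [l' [Hl' ->]].
exists ([seq (a *: t.1.1, t.1.2, t.2) | t <- l] ++ l'); split.
  move=> t; rewrite mem_cat => /orP [/mapP [t' /Hl H ->]|/Hl'] //.
rewrite big_cat big_map scaler_sumr /=; congr (_ + _).
by apply: eq_bigr => t _; rewrite !scalerAl.
Qed.

Lemma gi_ideal (R : algType k) (S : set R) : two_sided_ideal *%R (gen_ideal S).
Proof.
split; first exact: gi_subspace.
move=> x y [l [Hl ->]]; split.
  exists [seq (x * t.1.1, t.1.2, t.2) | t <- l]; split.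
    by move=> t /mapP [t' /Hl H ->].
  by rewrite big_map mulr_sumr; apply: eq_bigr => t _; rewrite !mulrA.
exists [seq (t.1.1, t.1.2, t.2 * x) | t <- l]; split.
  by move=> t /mapP [t' /Hl H ->].
by rewrite big_map mulr_suml; apply: eq_bigr => t _; rewrite !mulrA.
Qed.

Lemma gi_in (R : algType k) (S : set R) c : S c -> gen_ideal S c.
Proof.
move=> Hc; exists [:: (1, c, 1)]; split; first by move=> t; rewrite inE => /eqP ->.
by rewrite big_seq1 /= mul1r mulr1.
Qed.

Lemma gi_triple (R : algType k) (S : set R) x c y : S c -> gen_ideal S (x * c * y).
Proof.
move=> Hc; exists [:: (x, c, y)]; split; first by move=> t; rewrite inE => /eqP ->.
by rewrite big_seq1.
Qed.

Lemma gi_sub (R : algType k) (S I : set R) :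
  two_sided_ideal *%R I -> (forall c, S c -> I c) -> forall a, gen_ideal S a -> I a.
Proof.
move=> [HIs HI] HSI a [l [Hl ->]]; apply: sub_sum_seq => // t /Hl /HSI Ic.
by have [/(HI t.2) [_ ?] _] := HI t.1.1 _ Ic.
Qed.

Lemma tmap_tspan (U V U' V' : lmodType k) (f : U -> U') (g : V -> V')
  (P : U -> V -> Prop) (Q : U' -> V' -> Prop) X :
  is_lin f -> is_lin g -> (forall u v, P u v -> Q (f u) (g v)) ->
  tspan tm P X -> tspan tm Q (tmap tm f g X).
Proof.
move=> Hf Hg HPQ [s [Ps ->]]; rewrite (lin_sum (tmap_lin Hf Hg)).
apply: tspan_sum_seq => p /Ps Hp; rewrite (tmap_tm Hf Hg).
by apply: tspan_tm; apply: HPQ.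
Qed.

Lemma tauI1 (S : set A) : (forall c, S c -> A0 c) -> forall a, gen_ideal S a ->
  forall b, tspan tm (fun u (_ : B) => gen_ideal S u) (tau (b *t a)).
Proof.
move=> HS a [l [Hl ->]] b.
rewrite tm_sumr (lin_sum tau_lin); apply: tspan_sum_seq => t /Hl Sc.
rewrite tauA tauA (tmul_Z_c1 _ (HS _ Sc)).
have [l' ->] := tens_sum (tau (b *t t.1.1)).
rewrite (lin_sum (tmap_lin (rmul_lin t.1.2) (@lin_id _ _))) (lin_sum (tmul_linl _)).
apply: tspan_sum => p.
rewrite (tmap_tm (rmul_lin t.1.2) (@lin_id _ _)) tmul_tm.
apply: tspan_mono (tmap_span (lmul_lin _) (rmul_lin _) _) => u' v' [u [v [-> _]]].
exact: gi_triple.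
Qed.

Lemma tauJ1 (S : set B) : (forall c, S c -> B0 c) -> forall b, gen_ideal S b ->
  forall a, tspan tm (fun (_ : A) v => gen_ideal S v) (tau (b *t a)).
Proof.
move=> HS b [l [Hl ->]] a.
rewrite tm_suml (lin_sum tau_lin); apply: tspan_sum_seq => t /Hl Sc.
rewrite -mulrA tauB tauB (tmul_1c_Z _ (HS _ Sc)).
have [l' ->] := tens_sum (tau (t.2 *t a)).
rewrite (lin_sum (tmap_lin (@lin_id _ _) (lmul_lin t.1.2))) (lin_sum (tmul_linr _)).
apply: tspan_sum => p.
rewrite (tmap_tm (@lin_id _ _) (lmul_lin t.1.2)) tmul_tm.
apply: tspan_mono (tmap_span (lmul_lin _) (rmul_lin _) _) => u' v' [u [v [_ ->]]].
by rewrite mulrA; apply: gi_triple.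
Qed.

Lemma gi_fin (R : algType k) (R0 : set R) (I : set R) :
  subalg R0 -> fin_gen_left R0 -> cof_ideal *%R I ->
  fin_codim (gen_ideal (fun c => I c /\ R0 c)).
Proof.
move=> [R01 [HR0s HR0m]] [s Hs] [[HIs HI] HIf].
have [r [xs [Rxs Hxs]]] := fin_codim_cospan HIf HR0s.
apply: (cospan_fin (T := ('I_r * 'I_(size s))%type)
   (e := fun q => xs q.1 * s`_q.2)); first exact: gi_subspace.
move=> a; have [c [Hsz [Hc Ea]]] := Hs a.
have : forall j : 'I_(size s), exists u : 'I_r -> k, I (c`_j - \sum_i u i *: xs i).
  move=> j; apply: Hxs; apply: Hc; apply: mem_nth; by rewrite Hsz.
move=> /fin_all_exists [u Hu].
exists (fun q => u q.2 q.1).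
have -> : \sum_q u q.2 q.1 *: (xs q.1 * s`_q.2) =
          \sum_(i < r) \sum_(j < size s) u j i *: (xs i * s`_j).
  by rewrite pair_bigA.
rewrite exchange_big Ea -sumrB.
apply: (sub_sum (gi_subspace _)) => j.
have -> : c`_j * s`_j - \sum_(i < r) u j i *: (xs i * s`_j) =
          1 * (c`_j - \sum_i u j i *: xs i) * s`_j.
  rewrite mul1r mulrBl mulr_suml; congr (_ - _); apply: eq_bigr => i _.
  by rewrite scalerAl.
apply: gi_triple; split; first exact: Hu.
apply: (subB HR0s); first by apply: Hc; apply: mem_nth; rewrite Hsz.
by apply: (sub_sum HR0s) => i; apply: (subZ HR0s).
Qed.

Lemma gi_cof (R : algType k) (R0 : set R) (I : set R) :
  subalg R0 -> fin_gen_left R0 -> cof_ideal *%R I ->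
  cof_ideal *%R (gen_ideal (fun c => I c /\ R0 c)).
Proof. by move=> H1 H2 H3; split; [exact: gi_ideal|exact: gi_fin]. Qed.

Lemma gi_subI (R : algType k) (R0 : set R) (I : set R) :
  cof_ideal *%R I -> forall a, gen_ideal (fun c => I c /\ R0 c) a -> I a.
Proof. by move=> [HI _]; apply: gi_sub => // c []. Qed.

Hypothesis HfinA : finite_ext A0.
Hypothesis HfinB : finite_ext B0.

Theorem tau_continuous :
  lin_continuous
    (tens_open tm (cof_open (@GRing.mul B)) (cof_open (@GRing.mul A)))
    (tens_open tm (cof_open (@GRing.mul A)) (cof_open (@GRing.mul B)))
    tau.
Proof.
move=> W [HW [E0 [F0 [[HE0 [I [HI IE]]] [[HF0 [J [HJ JF]]] HEF]]]]].
split.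
  split; first by rewrite /= (lin0 tau_lin); apply: sub0.
  by move=> a u v Hu Hv /=; rewrite tau_lin; apply: HW.2.
exists (gen_ideal (fun c => J c /\ B0 c)), (gen_ideal (fun c => I c /\ A0 c)).
split.
  split; first exact: gi_subspace.
  by exists (gen_ideal (fun c => J c /\ B0 c)); split => //; apply: gi_cof => //; case: HfinB.
split.
  split; first exact: gi_subspace.
  by exists (gen_ideal (fun c => I c /\ A0 c)); split => //; apply: gi_cof => //; case: HfinA.
move=> X [s [Hs ->]] /=; rewrite (lin_sum tau_lin); apply: (sub_sum_seq HW) => p /Hs [HJ1|HI1].
  apply: HEF; apply: tspan_mono (tauJ1 (fun c => @proj2 _ _) HJ1 p.2) => u v Hv.
  by right; apply: JF; exact: (gi_subI HJ Hv).
apply: HEF; apply: tspan_mono (tauI1 (fun c => @proj2 _ _) HI1 p.1) => u v Hu.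
by left; apply: IE; exact: (gi_subI HI Hu).
Qed.

Section K0.
Variables (I : set A) (J : set B).
Hypotheses (HI : cof_ideal *%R I) (HJ : cof_ideal *%R J).
Local Notation I1 := (gen_ideal (fun c => I c /\ A0 c)).
Local Notation J1 := (gen_ideal (fun c => J c /\ B0 c)).
Definition K0 := tspan tm (fun a b => I1 a \/ J1 b).

Lemma K0_subspace : subspace K0.
Proof.
apply: tspan_subspace => a v w [Hv|Hw]; last by right.
by left; apply: (subZ (gi_subspace _)).
Qed.

Lemma K0_prod (x a : A) (y b : B) : I1 a \/ J1 b ->
  K0 (tmul (x *t y) (a *t b)) /\ K0 (tmul (a *t b) (x *t y)).
Proof.
have [_ HgI] := gi_ideal (fun c => I c /\ A0 c).
have [_ HgJ] := gi_ideal (fun c => J c /\ B0 c).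
move=> Hab; rewrite !tmul_tm; split.
  case: Hab => [Ha|Hb].
    apply: (tmap_tspan (P := fun u (_ : B) => I1 u)) (lmul_lin _) (rmul_lin _) _ _.
      by move=> u v Hu; left; case: (HgI x u Hu).
    exact: (tauI1 (fun c => @proj2 _ _) Ha).
  apply: tspan_mono (tmap_span (lmul_lin _) (rmul_lin _) _) => u' v' [u [v [_ ->]]].
  by right; case: (HgJ v b Hb).
case: Hab => [Ha|Hb].
  apply: tspan_mono (tmap_span (lmul_lin _) (rmul_lin _) _) => u' v' [u [v [-> _]]].
  by left; case: (HgI u a Ha).
apply: (tmap_tspan (P := fun (_ : A) v => J1 v)) (lmul_lin _) (rmul_lin _) _ _.
  by move=> u v Hv; right; case: (HgJ y v Hv).
exact: (tauJ1 (fun c => @proj2 _ _) Hb).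
Qed.

Lemma K0_ideal : two_sided_ideal tmul K0.
Proof.
split; first exact: K0_subspace.
move=> X Y [s [Hs ->]]; have [l ->] := tens_sum X.
rewrite (lin_sum (tmul_linl _)) (lin_sum (tmul_linr _)).
split; apply: tspan_sum => q.
  rewrite (lin_sum (tmul_linr _)); apply: tspan_sum_seq => p /Hs Hp.
  by case: (K0_prod q.1 q.2 Hp).
rewrite (lin_sum (tmul_linl _)); apply: tspan_sum_seq => p /Hs Hp.
by case: (K0_prod q.1 q.2 Hp).
Qed.

Lemma tm_diff (a a' : A) (b b' : B) :
  a *t b - a' *t b' = (a - a') *t b + a' *t (b - b').
Proof.
rewrite !(linB ((@tm_bilin A B).1 _)) !(linB ((@tm_bilin A B).2 _)) /=.
by rewrite addrA addrNK.
Qed.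

Lemma K0_fin : fin_codim K0.
Proof.
have HI1 := gi_cof HA0 HfinA.1 HI.
have HJ1 := gi_cof HB0 HfinB.1 HJ.
have [M [e [p Hp]]] := cof_coord HI1.
have [M' [e' [q Hq]]] := cof_coord HJ1.
apply: (cospan_fin (T := ('I_M * 'I_M')%type) (e := fun ij => e ij.1 *t e' ij.2)).
  exact: K0_subspace.
move=> X; have [l ->] := tens_sum X.
exists (fun ij => \sum_(t <- l) p t.1 0 ij.1 * q t.2 0 ij.2).
have -> : \sum_ij (\sum_(t <- l) p t.1 0 ij.1 * q t.2 0 ij.2) *: (e ij.1 *t e' ij.2)
   = \sum_(t <- l) ((\sum_i p t.1 0 i *: e i) *t (\sum_j q t.2 0 j *: e' j)).
  under eq_bigr do rewrite scaler_suml.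
  rewrite exchange_big /=; apply: eq_bigr => t _.
  rewrite tm_suml; under [RHS]eq_bigr do rewrite tm_sumr.
  rewrite pair_bigA /=; apply: eq_bigr => -[i j] _ /=.
  by rewrite tmZl tmZr scalerA.
rewrite -sumrB; apply: (sub_sum K0_subspace) => t.
rewrite tm_diff; apply: tspanD; apply: tspan_tm.
  by left; case: Hp => _ [].
by right; case: Hq => _ [].
Qed.

Lemma K0_cof : cof_ideal tmul K0.
Proof. by split; [exact: K0_ideal|exact: K0_fin]. Qed.
End K0.

Lemma tpair_fdual_pure (f : fdualA A) (g : fdualA B) :
  in_fdual tmul (fun X => tpair tm (f *t g) X).
Proof.
have [_ [I [HI fI]]] := fdvalP f.
have [_ [J [HJ gJ]]] := fdvalP g.
split; first exact: tpair_lin_X.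
exists (K0 I J); split; first exact: K0_cof.
move=> X [s [Hs ->]]; rewrite (lin_sum (tpair_lin_X _)) big_seq big1 // => t /Hs.
rewrite tpair_tmtm => -[Ha|Hb].
  by rewrite fI ?mul0r //; exact: (gi_subI HI Ha).
by rewrite gJ ?mulr0 //; exact: (gi_subI HJ Hb).
Qed.

Lemma tpair_fdual (xi : tens (fdualA A) (fdualA B)) :
  in_fdual tmul (fun X => tpair tm xi X).
Proof.
have [l ->] := tens_sum xi.
have -> : (fun X => tpair tm (\sum_(p <- l) p.1 *t p.2) X) =
          (fun X => \sum_(p <- l) tpair tm (p.1 *t p.2) X).
  by apply: funext => X; rewrite (lin_sum (tpair_lin_xi X)).
elim: l => [|p l IH].
  have -> : (fun X : tens A B => \sum_(p <- [::]) tpair tm (p.1 *t p.2) X) = 0.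
    by apply: funext => X; rewrite big_nil.
  exact: in_fdual0.
have -> : (fun X => \sum_(q <- p :: l) tpair tm (q.1 *t q.2) X) =
          1 *: (fun X => tpair tm (p.1 *t p.2) X) +
          (fun X => \sum_(q <- l) tpair tm (q.1 *t q.2) X).
  by apply: funext => X; rewrite big_cons /= scale1r.
by apply: in_fdualL => //; exact: tpair_fdual_pure.
Qed.

Lemma tau_dual_ex (xi : tens (fdualA A) (fdualA B)) :
  exists eta : tens (fdualA B) (fdualA A),
    forall X, tpair tm eta X = tpair tm xi (tau X).
Proof.
pose Q (xi : tens (fdualA A) (fdualA B)) := exists eta : tens (fdualA B) (fdualA A),
    forall X, tpair tm eta X = tpair tm xi (tau X).
have Qpure : forall f g, Q (f *t g).
  move=> f g.
  have [_ [I [HI fI]]] := fdvalP f.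
  have [_ [J [HJ gJ]]] := fdvalP g.
  have HI1 := gi_cof HA0 HfinA.1 HI.
  have HJ1 := gi_cof HB0 HfinB.1 HJ.
  have [M [e [p Hp]]] := cof_coord HJ1.
  have [M' [e' [q Hq]]] := cof_coord HI1.
  pose G (b : B) (a : A) : k^o := tpair tm (f *t g) (tau (b *t a)).
  have linG1 : forall a, is_lin (fun b => G b a).
    move=> a; apply: lin_comp (tpair_lin_X _) _.
    exact: lin_comp tau_lin ((@tm_bilin B A).1 a).
  have linG2 : forall b, is_lin (fun a => G b a).
    move=> b; apply: lin_comp (tpair_lin_X _) _.
    exact: lin_comp tau_lin ((@tm_bilin B A).2 b).
  have van1 : forall a b, gen_ideal (fun c => J c /\ B0 c) b -> G b a = 0.
    move=> a b Hb; rewrite /G.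
    have [s [Hs ->]] := tauJ1 (fun c => @proj2 _ _) Hb a.
    rewrite (lin_sum (tpair_lin_X _)) big_seq big1 // => t /Hs Ht.
    by rewrite tpair_tmtm gJ ?mulr0 //; exact: (gi_subI HJ Ht).
  have van2 : forall b a, gen_ideal (fun c => I c /\ A0 c) a -> G b a = 0.
    move=> b a Ha; rewrite /G.
    have [s [Hs ->]] := tauI1 (fun c => @proj2 _ _) Ha b.
    rewrite (lin_sum (tpair_lin_X _)) big_seq big1 // => t /Hs Ht.
    by rewrite tpair_tmtm fI ?mul0r //; exact: (gi_subI HI Ht).
  pose cB i := mkF (coord_in_fdual i HJ1 Hp).
  pose cA j := mkF (coord_in_fdual j HI1 Hq).
  exists (\sum_i \sum_j G (e i) (e' j) *: (cB i *t cA j)).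
  apply: tpair_eqX; first exact: lin_comp (tpair_lin_X _) tau_lin.
  move=> b a; rewrite (lin_sum (tpair_lin_xi _)).
  rewrite -/(G b a) (coord_rep (gi_subspace _) Hp (linG1 a) (van1 a) b).
  apply: eq_bigr => i _; rewrite (lin_sum (tpair_lin_xi _)).
  rewrite (coord_rep (gi_subspace _) Hq (linG2 (e i)) (van2 (e i)) a).
  rewrite scaleoE mulr_sumr; apply: eq_bigr => j _.
  rewrite (linZ (tpair_lin_xi _)) tpair_tmtm !mkFE.
  by rewrite /GRing.scale /=; ring.
have Q0 : Q 0 by exists 0 => X; rewrite !(lin0 (tpair_lin_xi _)).
have QD : forall x y, Q x -> Q y -> Q (x + y).
  move=> x y [ex Hx] [ey Hy]; exists (ex + ey) => X.
  by rewrite !(linD (tpair_lin_xi _)) Hx Hy.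
have [l ->] := tens_sum xi; elim: l => [|p l IH]; first by rewrite big_nil.
by rewrite big_cons; apply: QD.
Qed.

Lemma tau_dualP (xi : tens (fdualA A) (fdualA B)) X :
  tpair tm (tau_dual tm tau xi) X = tpair tm xi (tau X).
Proof.
move: X; rewrite /tau_dual.
exact: (ClassicalEpsilon.epsilon_spec (inhabits 0)
  (fun eta : tens (fdualA B) (fdualA A) => forall X, tpair tm eta X = tpair tm xi (tau X))
  (tau_dual_ex xi)).
Qed.

Lemma tau_dual_lin : is_lin (tau_dual tm tau).
Proof.
move=> c x y; apply: tpair_inj => b a.
rewrite tau_dualP !(tpair_lin_xi (_ *t _)) !tau_dualP.
by rewrite (tpair_lin_xi (tau (b *t a))).
Qed.

Lemma bilin_pre (U V U' V' W : lmodType k) (F : U' -> V' -> W) (f : U -> U') (g : V -> V') :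
  is_bilin F -> is_lin f -> is_lin g -> is_bilin (fun u v => F (f u) (g v)).
Proof.
move=> [F1 F2] Hf Hg; split=> [v|u].
  exact: (lin_comp (F1 (g v)) Hf).
exact: (lin_comp (F2 (f u)) Hg).
Qed.

Lemma tlift_tmap (U V U' V' W : lmodType k) (F : U' -> V' -> W) (f : U -> U') (g : V -> V') :
  is_bilin F -> is_lin f -> is_lin g ->
  forall Om, tlift tm F (tmap tm f g Om) = tlift tm (fun u v => F (f u) (g v)) Om.
Proof.
move=> HF Hf Hg; apply: tens_ext.
- exact: (lin_comp (tlift_lin HF) (tmap_lin Hf Hg)).
- exact: (tlift_lin (bilin_pre HF Hf Hg)).
move=> u v /=; rewrite (tmap_tm Hf Hg) (tlift_tm HF).
by rewrite (tlift_tm (bilin_pre HF Hf Hg)).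
Qed.

Lemma pair2_inj (R : lmodType k) (mul : R -> R -> R) (Z Z' : tens (fdual mul) (fdual mul)) :
  (forall x y, fd_pair2 tm Z x y = fd_pair2 tm Z' x y) -> Z = Z'.
Proof.
move=> H; apply/eqP; rewrite -subr_eq0; apply/eqP.
apply: (nondeg (eV := fun (h : fdual mul) x => fdval h x) (eW := fun (h : fdual mul) x => fdval h x)).
- by move=> x; exact: ev_lin.
- by move=> x; exact: ev_lin.
- exact: fd_inj.
- exact: fd_inj.
move=> x y; have := linB (pair2_linZ x y) Z Z'.
by rewrite /= H subrr.
Qed.

Lemma fd_delta_lin (R : lmodType k) (mul : R -> R -> R) :
  is_bilin mul -> is_lin (@fd_delta _ _ tm R mul).
Proof.
move=> Hmul a f g; apply: pair2_inj => x y.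
rewrite (pair2_linZ x y) !fd_deltaP //.
Qed.

Local Notation FA := (fdualA A).
Local Notation FB := (fdualA B).
Local Notation C := (tens FA FB).
Local Notation dA := (@fd_delta _ _ tm A (@GRing.mul A)).
Local Notation dB := (@fd_delta _ _ tm B (@GRing.mul B)).
Local Notation tD := (tau_dual tm tau).

Definition L4 (c1 : FA) (d2 : FB) (d' : FB) (c' : FA) : tens C C := (c1 *t d') *t (c' *t d2).
Definition L3 (c1 c2 : FA) (d1 d2 : FB) := tlift tm (L4 c1 d2) (tD (c2 *t d1)).
Definition L2 (c1 c2 : FA) (d : FB) := tlift tm (L3 c1 c2) (dB d).
Definition L1 (c : FA) (d : FB) := tlift tm (fun c1 c2 => L2 c1 c2 d) (dA c).

Lemma DlE (Xi : C) : cotw_delta tm tD dA dB Xi = tlift tm L1 Xi.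
Proof. by []. Qed.

Lemma L4_bilin c1 d2 : is_bilin (L4 c1 d2).
Proof.
split=> [c'|d'].
  exact: (lin_comp ((@tm_bilin C C).1 (c' *t d2)) ((@tm_bilin FA FB).2 c1)).
exact: (lin_comp ((@tm_bilin C C).2 (c1 *t d')) ((@tm_bilin FA FB).1 d2)).
Qed.
Lemma L4_lin1 d2 d' c' : is_lin (fun c1 => L4 c1 d2 d' c').
Proof. exact: (lin_comp ((@tm_bilin C C).1 _) ((@tm_bilin FA FB).1 d')). Qed.
Lemma L4_lin2 c1 d' c' : is_lin (fun d2 => L4 c1 d2 d' c').
Proof. exact: (lin_comp ((@tm_bilin C C).2 _) ((@tm_bilin FA FB).2 c')). Qed.

Lemma L3_bilin c1 c2 : is_bilin (L3 c1 c2).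
Proof.
split=> [d2|d1].
  apply: (lin_comp (tlift_lin (L4_bilin c1 d2))).
  exact: (lin_comp tau_dual_lin ((@tm_bilin FA FB).2 c2)).
exact: (tlift_lin_param (F := fun d2 => L4 c1 d2) (L4_bilin c1) (L4_lin2 c1)).
Qed.
Lemma L3_lin1 c2 d1 d2 : is_lin (fun c1 => L3 c1 c2 d1 d2).
Proof.
exact: (tlift_lin_param (F := fun c1 => L4 c1 d2) (fun c1 => L4_bilin c1 d2) (L4_lin1 d2)).
Qed.
Lemma L3_lin2 c1 d1 d2 : is_lin (fun c2 => L3 c1 c2 d1 d2).
Proof.
apply: (lin_comp (tlift_lin (L4_bilin c1 d2))).
exact: (lin_comp tau_dual_lin ((@tm_bilin FA FB).1 d1)).
Qed.

Lemma L2_bilin d : is_bilin (fun c1 c2 => L2 c1 c2 d).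
Proof.
split=> [c2|c1].
  exact: (tlift_lin_param (F := fun c1 => L3 c1 c2) (fun c1 => L3_bilin c1 c2)
           (fun d1 d2 => L3_lin1 c2 d1 d2)).
exact: (tlift_lin_param (F := fun c2 => L3 c1 c2) (fun c2 => L3_bilin c1 c2)
         (fun d1 d2 => L3_lin2 c1 d1 d2)).
Qed.
Lemma L2_lin3 c1 c2 : is_lin (L2 c1 c2).
Proof. exact: (lin_comp (tlift_lin (L3_bilin c1 c2)) (fd_delta_lin (mul_bilin B))). Qed.

Lemma L1_bilin : is_bilin L1.
Proof.
split=> [d|c].
  exact: (lin_comp (tlift_lin (L2_bilin d)) (fd_delta_lin (mul_bilin A))).
exact: (tlift_lin_param (F := fun d c1 c2 => L2 c1 c2 d) L2_bilin
         (fun c1 c2 => L2_lin3 c1 c2)).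
Qed.

Lemma Dl_lin : is_lin (cotw_delta tm tD dA dB).
Proof. exact: (tlift_lin L1_bilin). Qed.

Definition P2 (Om : tens C C) (X Y : tens A B) : k^o :=
  tlift tm (fun xi xi' : C => (tpair tm xi X * tpair tm xi' Y : k^o)) Om.

Lemma P2f_bilin X Y : is_bilin (fun xi xi' : C => (tpair tm xi X * tpair tm xi' Y : k^o)).
Proof. exact: (bilin_mul (tpair_lin_xi X) (tpair_lin_xi Y)). Qed.
Lemma P2_linO X Y : is_lin (fun Om => P2 Om X Y).
Proof. exact: (tlift_lin (P2f_bilin X Y)). Qed.
Lemma P2_tm (xi xi' : C) X Y : P2 (xi *t xi') X Y = tpair tm xi X * tpair tm xi' Y.
Proof. exact: (tlift_tm (P2f_bilin X Y)). Qed.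
Lemma P2_linX Om Y : is_lin (fun X => P2 Om X Y).
Proof.
apply: (tlift_lin_param (F := fun X (xi xi' : C) => (tpair tm xi X * tpair tm xi' Y : k^o))).
  by move=> X; exact: P2f_bilin.
by move=> xi xi'; exact: (lin_comp (lin_mulr _) (tpair_lin_X xi)).
Qed.
Lemma P2_linY Om X : is_lin (fun Y => P2 Om X Y).
Proof.
apply: (tlift_lin_param (F := fun Y (xi xi' : C) => (tpair tm xi X * tpair tm xi' Y : k^o))).
  by move=> Y; exact: P2f_bilin.
by move=> xi xi'; exact: (lin_comp (lin_mull _) (tpair_lin_X xi')).
Qed.

Lemma tpair_nondeg' (xi : C) : (forall X, tpair tm xi X = 0) -> xi = 0.
Proof. by move=> H; apply: tpair_nondeg => a b; apply: H. Qed.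

Lemma P2_inj (Om Om' : tens C C) : (forall X Y, P2 Om X Y = P2 Om' X Y) -> Om = Om'.
Proof.
move=> H; apply/eqP; rewrite -subr_eq0; apply/eqP.
apply: (nondeg (eV := fun (xi : C) X => tpair tm xi X) (eW := fun (xi : C) X => tpair tm xi X)).
- by move=> X; exact: tpair_lin_xi.
- by move=> X; exact: tpair_lin_xi.
- exact: tpair_nondeg'.
- exact: tpair_nondeg'.
move=> X Y; have := linB (P2_linO X Y) Om Om'.
by rewrite /= H subrr.
Qed.

Lemma Lay4 c1 d2 (Z : tens FB FA) a b a' b' :
  P2 (tlift tm (L4 c1 d2) Z) (a *t b) (a' *t b') =
  fdval c1 a * fdval d2 b' * tpair tm Z (b *t a').
Proof.
rewrite (tlift_comp (P2_linO _ _) (L4_bilin c1 d2)).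
rewrite (tlift_ext (g := fun (d' : FB) (c' : FA) =>
   (fdval c1 a * fdval d2 b') *: (fdval d' b * fdval c' a' : k^o))); last first.
  by move=> d' c'; rewrite /L4 P2_tm !tpair_tmtm /GRing.scale /=; ring.
rewrite tlift_scale; last exact: (bilin_mul (ev_lin b) (ev_lin a')).
by rewrite tpair_tm_r.
Qed.

Lemma Kpure (al : FA) (be : FB) a b a' b' :
  P2 (cotw_delta tm tD dA dB (al *t be)) (a *t b) (a' *t b') =
  tpair tm (al *t be) (tmul (a *t b) (a' *t b')).
Proof.
have [ls Els] := tens_sum (dA al).
have [lr Elr] := tens_sum (dB be).
have [lt Elt] := tens_sum (tau (b *t a')).
have LHS : P2 (cotw_delta tm tD dA dB (al *t be)) (a *t b) (a' *t b') =
  \sum_(s <- ls) \sum_(r <- lr) \sum_(t <- lt)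
     fdval s.1 a * fdval r.2 b' * (fdval s.2 t.1 * fdval r.1 t.2).
  rewrite DlE (tlift_tm L1_bilin) /L1 Els (lin_sum (tlift_lin (L2_bilin be))).
  rewrite (lin_sum (P2_linO _ _)); apply: eq_bigr => s _.
  rewrite (tlift_tm (L2_bilin be)) /L2 Elr (lin_sum (tlift_lin (L3_bilin _ _))).
  rewrite (lin_sum (P2_linO _ _)); apply: eq_bigr => r _.
  rewrite (tlift_tm (L3_bilin _ _)) /L3 Lay4 tau_dualP Elt (lin_sum (tpair_lin_X _)).
  by rewrite mulr_sumr; apply: eq_bigr => t _; rewrite tpair_tmtm.
have RHS : tpair tm (al *t be) (tmul (a *t b) (a' *t b')) =
  \sum_(t <- lt) (\sum_(s <- ls) fdval s.1 a * fdval s.2 t.1) *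
                 (\sum_(r <- lr) fdval r.1 t.2 * fdval r.2 b').
  rewrite tmul_tm Elt (lin_sum (tmap_lin (lmul_lin a) (rmul_lin b'))).
  rewrite (lin_sum (tpair_lin_X _)); apply: eq_bigr => t _.
  rewrite (tmap_tm (lmul_lin a) (rmul_lin b')) tpair_tmtm.
  rewrite -(fd_deltaP (mul_bilin A)) -(fd_deltaP (mul_bilin B)) Els Elr.
  rewrite !(lin_sum (pair2_linZ _ _)).
  by congr (_ * _); apply: eq_bigr => p _; rewrite pair2_tm.
rewrite LHS RHS; symmetry.
under eq_bigr do rewrite mulr_suml.
under eq_bigr do under eq_bigr do rewrite mulr_sumr.
rewrite exchange_big; apply: eq_bigr => s _.
rewrite exchange_big; apply: eq_bigr => r _.
by apply: eq_bigr => t _; ring.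
Qed.

Local Notation Dl := (cotw_delta tm tD dA dB).

Lemma Kgen (Xi : C) X Y : P2 (Dl Xi) X Y = tpair tm Xi (tmul X Y).
Proof.
have K1 : forall (Xi : C) a b a' b',
    P2 (Dl Xi) (a *t b) (a' *t b') = tpair tm Xi (tmul (a *t b) (a' *t b')).
  move=> Xi' a b a' b'; move: Xi'.
  apply: (tens_ext (g := fun Xi => P2 (Dl Xi) (a *t b) (a' *t b'))
                   (h := fun Xi => tpair tm Xi (tmul (a *t b) (a' *t b')))).
  - exact: (lin_comp (P2_linO _ _) Dl_lin).
  - exact: tpair_lin_xi.
  by move=> al be; exact: Kpure.
have K2 : forall X a' b', P2 (Dl Xi) X (a' *t b') = tpair tm Xi (tmul X (a' *t b')).
  move=> X' a' b'; move: X'.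
  apply: (tens_ext (g := fun X => P2 (Dl Xi) X (a' *t b'))
                   (h := fun X => tpair tm Xi (tmul X (a' *t b')))).
  - exact: P2_linX.
  - exact: (lin_comp (tpair_lin_X Xi) (tmul_linl _)).
  by move=> a b; exact: K1.
move: Y.
apply: (tens_ext (g := fun Y => P2 (Dl Xi) X Y) (h := fun Y => tpair tm Xi (tmul X Y))).
- exact: P2_linY.
- exact: (lin_comp (tpair_lin_X Xi) (tmul_linr _)).
by move=> a' b'; exact: K2.
Qed.

Local Notation epsAB := (cotw_eps tm (@fd_eps _ A (@GRing.mul A) 1)
                 (@fd_eps _ B (@GRing.mul B) 1)).

Lemma epsE (xi : C) : epsAB xi = tpair tm xi (1 *t 1).
Proof. by rewrite tpair_tm_r. Qed.

Lemma eps_lin : is_lin epsAB.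
Proof. by move=> c x y; rewrite !epsE (tpair_lin_xi (1 *t 1)). Qed.

Lemma bilin_epsL : is_bilin (fun (e c' : C) => (epsAB e : k) *: c').
Proof.
split=> [c'|e] a u v.
  by rewrite eps_lin scalerDl scalerA.
by rewrite scalerDr scalerA mulrC -scalerA.
Qed.

Lemma bilin_epsR : is_bilin (fun (c' e : C) => (epsAB e : k) *: c').
Proof. exact: (bilin_swap bilin_epsL). Qed.

Lemma counitL_pair (Om : tens C C) X :
  tpair tm (tlift tm (fun (e c' : C) => (epsAB e : k) *: c') Om) X = P2 Om (1 *t 1) X.
Proof.
move: Om.
apply: (tens_ext (g := fun Om => tpair tm (tlift tm (fun (e c' : C) => (epsAB e : k) *: c') Om) X)
                 (h := fun Om => P2 Om (1 *t 1) X)).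
- exact: (lin_comp (tpair_lin_xi X) (tlift_lin bilin_epsL)).
- exact: P2_linO.
move=> e c' /=; rewrite (tlift_tm bilin_epsL) P2_tm (linZ (tpair_lin_xi X)) epsE.
by [].
Qed.

Lemma counitR_pair (Om : tens C C) X :
  tpair tm (tlift tm (fun (c' e : C) => (epsAB e : k) *: c') Om) X = P2 Om X (1 *t 1).
Proof.
move: Om.
apply: (tens_ext (g := fun Om => tpair tm (tlift tm (fun (c' e : C) => (epsAB e : k) *: c') Om) X)
                 (h := fun Om => P2 Om X (1 *t 1))).
- exact: (lin_comp (tpair_lin_xi X) (tlift_lin bilin_epsR)).
- exact: P2_linO.
move=> c' e /=; rewrite (tlift_tm bilin_epsR) P2_tm (linZ (tpair_lin_xi X)) epsE.
by rewrite scaleoE mulrC.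
Qed.

Definition P3 (Om : tens C (tens C C)) (X Y Z : tens A B) : k^o :=
  tlift tm (fun (xi : C) (w : tens C C) => (tpair tm xi X * P2 w Y Z : k^o)) Om.

Lemma P3f_bilin X Y Z :
  is_bilin (fun (xi : C) (w : tens C C) => (tpair tm xi X * P2 w Y Z : k^o)).
Proof. exact: (bilin_mul (tpair_lin_xi X) (P2_linO Y Z)). Qed.

Lemma P3_inj (Om Om' : tens C (tens C C)) :
  (forall X Y Z, P3 Om X Y Z = P3 Om' X Y Z) -> Om = Om'.
Proof.
move=> H; apply/eqP; rewrite -subr_eq0; apply/eqP.
apply: (nondeg (eV := fun (xi : C) X => tpair tm xi X)
               (eW := fun (w : tens C C) (YZ : tens A B * tens A B) => P2 w YZ.1 YZ.2)).
- by move=> X; exact: tpair_lin_xi.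
- by move=> YZ; exact: P2_linO.
- exact: tpair_nondeg'.
- move=> w Hw; apply: P2_inj => Y Z; rewrite (lin0 (P2_linO Y Z)).
  exact: (Hw (Y, Z)).
move=> X [Y Z]; have := linB (tlift_lin (P3f_bilin X Y Z)) Om Om'.
by rewrite /= -/(P3 _ X Y Z) -/(P3 _ X Y Z) -/(P3 _ X Y Z) H subrr.
Qed.

Lemma bilin_assoc :
  is_bilin (fun (X0 : tens C C) (w : C) => tlift tm (fun u v : C => u *t (v *t w)) X0).
Proof.
have Hb : forall w : C, is_bilin (fun u v : C => u *t (v *t w)).
  by move=> w; exact: (bilin_tm (@lin_id _ C) ((@tm_bilin C C).1 w)).
split=> [w|X0]; first exact: tlift_lin (Hb w).
apply: (tlift_lin_param (F := fun w (u v : C) => u *t (v *t w))) => // u v.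
exact: (lin_comp ((@tm_bilin C (tens C C)).2 u) ((@tm_bilin C C).2 v)).
Qed.

Lemma assocP (Th : tens (tens C C) C) X Y Z :
  P3 (tassoc tm Th) X Y Z =
  tlift tm (fun (Psi : tens C C) (ze : C) => (P2 Psi X Y * tpair tm ze Z : k^o)) Th.
Proof.
move: Th.
apply: (tens_ext (g := fun Th => P3 (tassoc tm Th) X Y Z)).
- exact: (lin_comp (tlift_lin (P3f_bilin X Y Z)) (tlift_lin bilin_assoc)).
- exact: (tlift_lin (bilin_mul (P2_linO X Y) (tpair_lin_xi Z))).
move=> Psi ze /=.
rewrite /tassoc (tlift_tm bilin_assoc).
have Hb : is_bilin (fun u v : C => u *t (v *t ze)).
  exact: (bilin_tm (@lin_id _ C) ((@tm_bilin C C).1 ze)).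
rewrite (tlift_tm (bilin_mul (P2_linO X Y) (tpair_lin_xi Z))).
rewrite /P3 (tlift_comp (tlift_lin (P3f_bilin X Y Z)) Hb).
rewrite (tlift_ext (g := fun u v : C => tpair tm ze Z *: (tpair tm u X * tpair tm v Y : k^o))).
  by rewrite (tlift_scale _ (P2f_bilin X Y)) scaleoE mulrC.
move=> u v; rewrite (tlift_tm (P3f_bilin X Y Z)) P2_tm.
by rewrite /GRing.scale /=; ring.
Qed.

Lemma Dl_coassoc (Xi : C) :
  tassoc tm (tmap tm Dl id (Dl Xi)) = tmap tm id Dl (Dl Xi).
Proof.
apply: P3_inj => X Y Z.
rewrite assocP.
rewrite (tlift_tmap (bilin_mul (P2_linO X Y) (tpair_lin_xi Z)) Dl_lin (@lin_id _ _)).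
rewrite (tlift_ext (g := fun (w : C) (ze : C) => (tpair tm w (tmul X Y) * tpair tm ze Z : k^o))); last first.
  by move=> w ze; rewrite Kgen.
rewrite -/(P2 _ _ _) Kgen.
rewrite /P3 (tlift_tmap (P3f_bilin X Y Z) (@lin_id _ _) Dl_lin).
rewrite (tlift_ext (g := fun (xi w : C) => (tpair tm xi X * tpair tm w (tmul Y Z) : k^o))); last first.
  by move=> xi w; rewrite Kgen.
by rewrite -/(P2 _ _ _) Kgen tmul_assoc.
Qed.

Lemma Dl_counitL (Xi : C) :
  tlift tm (fun (e c' : C) => (epsAB e : k) *: c') (Dl Xi) = Xi.
Proof.
apply: tpair_inj => a b; rewrite counitL_pair Kgen.
by case: Htau => _ [_ [HL _]]; rewrite HL.
Qed.

Lemma Dl_counitR (Xi : C) :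
  tlift tm (fun (c' e : C) => (epsAB e : k) *: c') (Dl Xi) = Xi.
Proof.
apply: tpair_inj => a b; rewrite counitR_pair Kgen.
by case: Htau => _ [_ [_ HR]]; rewrite HR.
Qed.

Theorem tau_dual_cotwisting :
  is_cotwisting tm tD dA (@fd_eps _ A (@GRing.mul A) 1) dB (@fd_eps _ B (@GRing.mul B) 1).
Proof.
split; first exact: tau_dual_lin.
split; first exact: Dl_lin.
split; first exact: eps_lin.
split; first exact: Dl_coassoc.
by split; [exact: Dl_counitL|exact: Dl_counitR].
Qed.

Local Notation TAB := (fdual tmul).

Lemma tmul_a1_x1 (a x : A) : tmul (a *t 1) (x *t 1) = (a * x) *t 1.
Proof. by rewrite tmul_tm tau_1a (tmap_tm (lmul_lin a) (rmul_lin 1)) mulr1. Qed.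

Lemma Phi_ex (f : TAB) : exists xi : C, forall X, tpair tm xi X = fdval f X.
Proof.
have [Hf [K [[[HKs HKi] HKf] fK]]] := fdvalP f.
pose IK := fun a : A => K (a *t 1).
pose JK := fun b : B => K (1 *t b).
have HIK : cof_ideal *%R IK.
  split; first split.
  - split; first by rewrite /IK tm0l; apply: sub0.
    by move=> c u v Hu Hv; rewrite /IK tmDl tmZl; apply: HKs.2.
  - move=> x y Ky; split.
      by rewrite /IK -tmul_x1_ab; case: (HKi (x *t 1) _ Ky).
    by rewrite /IK -tmul_a1_x1; case: (HKi (x *t 1) _ Ky).
  - have [n [p [Hp Kp]]] := HKf; exists n, (fun a => p (a *t 1)); split.
      exact: (lin_comp Hp ((@tm_bilin A B).1 1)).
    by move=> a; apply: Kp.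
have HJK : cof_ideal *%R JK.
  split; first split.
  - split; first by rewrite /JK tm0r; apply: sub0.
    by move=> c u v Hu Hv; rewrite /JK tmDr tmZr; apply: HKs.2.
  - move=> x y Ky; split.
      by rewrite /JK -[1 *t (x * y)]tmul_ab_1y; case: (HKi (1 *t x) _ Ky).
    by rewrite /JK -[1 *t (y * x)]tmul_ab_1y; case: (HKi (1 *t x) _ Ky).
  - have [n [p [Hp Kp]]] := HKf; exists n, (fun b => p (1 *t b)); split.
      exact: (lin_comp Hp ((@tm_bilin A B).2 1)).
    by move=> b; apply: Kp.
have [M [e [p Hp]]] := cof_coord HIK.
have [M' [e' [q Hq]]] := cof_coord HJK.
have HIKs : subspace IK by case: HIK => [[]].
have HJKs : subspace JK by case: HJK => [[]].
pose G (a : A) (b : B) : k^o := fdval f (a *t b).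
have linG1 : forall b, is_lin (fun a => G a b).
  by move=> b; exact: (lin_comp Hf ((@tm_bilin A B).1 b)).
have linG2 : forall a, is_lin (fun b => G a b).
  by move=> a; exact: (lin_comp Hf ((@tm_bilin A B).2 a)).
have Eab : forall a b, a *t b = tmul (a *t 1) (1 *t b).
  by move=> a b; rewrite tmul_ab_1y mul1r.
have van1 : forall b a, IK a -> G a b = 0.
  move=> b a Ha; apply: fK; rewrite Eab.
  by case: (HKi (1 *t b) _ Ha).
have van2 : forall a b, JK b -> G a b = 0.
  move=> a b Hb; apply: fK; rewrite Eab.
  by case: (HKi (a *t 1) _ Hb).
pose cA i := mkF (coord_in_fdual i HIK Hp).
pose cB j := mkF (coord_in_fdual j HJK Hq).
exists (\sum_i \sum_j G (e i) (e' j) *: (cA i *t cB j)).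
apply: tpair_eqX; first exact: Hf.
move=> a b; rewrite (lin_sum (tpair_lin_xi _)).
rewrite -/(G a b) (coord_rep HIKs Hp (linG1 b) (van1 b) a).
apply: eq_bigr => i _; rewrite (lin_sum (tpair_lin_xi _)).
rewrite (coord_rep HJKs Hq (linG2 (e i)) (van2 (e i)) b).
rewrite scaleoE mulr_sumr; apply: eq_bigr => j _.
rewrite (linZ (tpair_lin_xi _)) tpair_tmtm !mkFE.
by rewrite /GRing.scale /=; ring.
Qed.

Definition Phi (f : TAB) : C :=
  ClassicalEpsilon.epsilon (inhabits 0) (fun xi : C => forall X, tpair tm xi X = fdval f X).

Lemma PhiP f X : tpair tm (Phi f) X = fdval f X.
Proof.
move: X; exact: (ClassicalEpsilon.epsilon_spec (inhabits 0)
  (fun xi : C => forall X, tpair tm xi X = fdval f X) (Phi_ex f)).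
Qed.

Lemma Phi_lin : is_lin Phi.
Proof.
move=> c f g; apply: tpair_inj => a b.
by rewrite PhiP (tpair_lin_xi (a *t b)) !PhiP.
Qed.

Definition Psi (xi : C) : TAB := mkF (tpair_fdual xi).

Lemma Phi_bij : bijective Phi.
Proof.
exists Psi => [f|xi].
  by apply: fd_eq => X; rewrite mkFE PhiP.
by apply: tpair_inj => a b; rewrite PhiP mkFE.
Qed.

Lemma Phi_delta (f : TAB) : tmap tm Phi Phi (fd_delta tm f) = Dl (Phi f).
Proof.
apply: P2_inj => X Y.
rewrite Kgen PhiP /P2 (tlift_tmap (P2f_bilin X Y) Phi_lin Phi_lin).
rewrite (tlift_ext (g := fun u v : TAB => (fdval u X * fdval v Y : k^o))); last first.
  by move=> u v; rewrite !PhiP.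
by have := fd_deltaP tmul_bilin f X Y; rewrite /fd_pair2 => ->.
Qed.

Lemma Phi_eps (f : TAB) : epsAB (Phi f) = fd_eps (1 *t 1) f.
Proof. by rewrite epsE PhiP. Qed.

Theorem main_thm :
  lin_continuous
    (tens_open tm (cof_open (@GRing.mul B)) (cof_open (@GRing.mul A)))
    (tens_open tm (cof_open (@GRing.mul A)) (cof_open (@GRing.mul B)))
    tau
  /\
  is_cotwisting tm (tau_dual tm tau)
    (@fd_delta _ _ tm A (@GRing.mul A)) (@fd_eps _ A (@GRing.mul A) 1)
    (@fd_delta _ _ tm B (@GRing.mul B)) (@fd_eps _ B (@GRing.mul B) 1)
  /\
  exists Phi : fdual (twisted_mul tm tau) ->
               tens (fdualA A) (fdualA B),
    is_lin Phi /\ bijective Phi /\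
    (forall f, tmap tm Phi Phi (fd_delta tm f) =
               cotw_delta tm (tau_dual tm tau)
                 (@fd_delta _ _ tm A (@GRing.mul A)) (@fd_delta _ _ tm B (@GRing.mul B))
                 (Phi f)) /\
    (forall f, cotw_eps tm (@fd_eps _ A (@GRing.mul A) 1)
                 (@fd_eps _ B (@GRing.mul B) 1) (Phi f) =
               fd_eps (tm A B 1 1) f).
Proof.
split; first exact: tau_continuous.
split; first exact: tau_dual_cotwisting.
exists Phi; split; first exact: Phi_lin.
split; first exact: Phi_bij.
split; first exact: Phi_delta.
exact: Phi_eps.
Qed.
End Twist. End Main.

Unset Implicit Arguments.
Set Strict Implicit.

Theorem theorem4p2 (k : fieldType)
  (tens : lmodType k -> lmodType k -> lmodType k)
  (tm : forall V W : lmodType k, V -> W -> tens V W)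
  (Htens : tensor_univ tm)
  (A B : algType k) (tau : tens B A -> tens A B)
  (Htau : is_twisting tm tau)
  (A0 : set A) (B0 : set B)
  (HA0 : subalg A0) (HB0 : subalg B0)
  (HfinA : finite_ext A0) (HfinB : finite_ext B0)
  (HresA : forall X, tspan tm (fun (b : B) (a : A) => A0 a) X ->
             tau X = tswap tm X)
  (HresB : forall X, tspan tm (fun (b : B) (a : A) => B0 b) X ->
             tau X = tswap tm X) :
  (* tau : B (x)^! A -> A (x)^! B is continuous for the cofinite topologies *)
  lin_continuous
    (tens_open tm (cof_open (@GRing.mul B)) (cof_open (@GRing.mul A)))
    (tens_open tm (cof_open (@GRing.mul A)) (cof_open (@GRing.mul B)))
    tau
  /\
  (* tau° is a cotwisting map for the coalgebras A° and B° *)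
  is_cotwisting tm (tau_dual tm tau)
    (@fd_delta _ _ tm A (@GRing.mul A)) (@fd_eps _ A (@GRing.mul A) 1)
    (@fd_delta _ _ tm B (@GRing.mul B)) (@fd_eps _ B (@GRing.mul B) 1)
  /\
  (* (A (x)_tau B)° is isomorphic, as a coalgebra, to A° (x)^{tau°} B° *)
  exists Phi : fdual (twisted_mul tm tau) ->
               tens (fdualA A) (fdualA B),
    is_lin Phi /\ bijective Phi /\
    (forall f, tmap tm Phi Phi (fd_delta tm f) =
               cotw_delta tm (tau_dual tm tau)
                 (@fd_delta _ _ tm A (@GRing.mul A)) (@fd_delta _ _ tm B (@GRing.mul B))
                 (Phi f)) /\
    (forall f, cotw_eps tm (@fd_eps _ A (@GRing.mul A) 1)
                 (@fd_eps _ B (@GRing.mul B) 1) (Phi f) =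
               fd_eps (tm A B 1 1) f).
Proof.
exact: (main_thm Htens Htau HA0 HB0 HresA HresB HfinA HfinB).
Qed.
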